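(* Let $\mathcal{L}_\to\subseteq\{\land,\lor,\to,\lnot,0,1\}$ be a language containing $\to$ and $\Phi$ a Sahlqvist quasiequation in $\mathcal{L}_\to$. For every $\mathcal{L}_\to$-subreduct $\boldsymbol{A}$ of a Heyting algebra: $\boldsymbol{A}\vDash\mathsf{A}(\Phi)$ if and only if $\boldsymbol{B}_\ast\vDash\mathsf{tr}(\Phi)$ for every $\boldsymbol{B}\in\mathbb{V}(\boldsymbol{A})$.
   Context: An $\mathcal{L}_\to$-subreduct of a Heyting algebra is a subalgebra of its $\mathcal{L}_\to$-reduct; $\mathbb{V}(\boldsymbol{A})$ is the variety generated by $\boldsymbol{A}$. In such an algebra $x\to x$ is constant with value $1$; a formula $\varphi$ is valid in $\boldsymbol{A}$ if $\boldsymbol{A}\vDash\varphi\approx1$, and $\boldsymbol{A}\vDash S$ for a set $S$ of formulas means every member is valid. An implicative filter of $\boldsymbol{A}$ is $F\subseteq A$ with $1\in F$ and $a,a\to b\in F\Rightarrow b\in F$; $\boldsymbol{A}_\ast$ is the poset under inclusion of meet irreducible implicative filters (proper, and not the intersection of two implicative filters both different from it). Sahlqvist quasiequations: formulas over variables with $\land,\lor,\to,\lnot,0,1$; a variable occurrence is positive (negative) if the number of negations and implication antecedents in whose scope it lies is even (odd); positive/negative formulas have all occurrences so. Sahlqvist antecedent: built from variables, negative formulas, $0,1$ by $\land,\lor$. Sahlqvist implication: positive formula, or $\lnot\varphi$ with $\varphi$ a Sahlqvist antecedent, or $\varphi\to\psi$ with $\varphi$ a Sahlqvist antecedent and $\psi$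 positive. $\Phi=\varphi_1\land y\le z\,\&\cdots\&\,\varphi_m\land y\le z\Longrightarrow y\le z$, $y,z$ distinct variables not occurring in the $\varphi_i$, each $\varphi_i$ built from Sahlqvist implications by $\land,\lor$; $a\le b$ means $a\land b\approx a$; $\Phi$ is in $\mathcal{L}_\to$ if the $\varphi_i$ only use symbols from $\mathcal{L}_\to$. For each such formula $\varphi(x_1..x_n)$ and $k\ge1$, $\boldsymbol{\varphi}^k$ is the finite set of $\mathsf{IPC}$ formulas defined by: $\boldsymbol{x_m}^k=\{x_m^1..x_m^k\}$; $\boldsymbol{1}^k=\{\top(x_1^1)\}$ with $\top(x)=x\to x$; $\boldsymbol{0}^k=\{x_1^1, x_1^1\to0\}$; $(\boldsymbol{\psi\land\chi})^k=\boldsymbol{\psi}^k\cup\boldsymbol{\chi}^k$; with $\boldsymbol{\psi}^k=\{\psi_1..\psi_p\}$, $\boldsymbol{\chi}^k=\{\chi_1..\chi_t\}$: $(\boldsymbol{\lnot\psi})^k=\{\psi_1\to(\psi_2\to(\cdots(\psi_p\to0)\cdots))\}$, $(\boldsymbol{\psi\to\chi})^k=\{\psi_1\to(\cdots(\psi_p\to\chi_j)\cdots):j\le t\}$, $(\boldsymbol{\psi\lor\chi})^k=\{\psi_i\lor\chi_j:i\le p,j\le t\}$. For a finite set $\Gamma=\{\gamma_1..\gamma_n\}$ and formula $\varphi$, $\Gamma\to\varphi$ denotes $\{\gamma_1\to(\gamma_2\to(\cdots(\gamma_n\to\varphi)\cdots))\}$ (and for a union of such singletons $\Sigma$, $\Sigma\to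 y$ is defined likewise). Then $\mathsf{A}(\Phi)=\bigcup_{k\ge1}\big(((\boldsymbol{\varphi_1}^k\to y)\cup\cdots\cup(\boldsymbol{\varphi_m}^k\to y))\to y\big)$, with $y$ a variable not occurring in the $\boldsymbol{\varphi_i}^k$. $\mathsf{Up}(\mathbb{X})$ is the Heyting algebra of upsets of a poset ($\cap,\cup$, $U\to V=X\smallsetminus{\downarrow}(U\smallsetminus V)$, $\emptyset$, $X$), and $\mathsf{tr}(\Phi)$ is the effectively computable first-order sentence in the language of posets such that for every poset $\mathbb{X}$, $\mathsf{Up}(\mathbb{X})\vDash\Phi$ iff $\mathbb{X}\vDash\mathsf{tr}(\Phi)$. *)

(* Defs.v *)
From Stdlib Require Import List.
From mathcomp Require Import all_boot.
Set Implicit Arguments. Unset Strict Implicit. Unset Printing Implicit Defensive.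

Inductive fm : Type :=
| Var of nat
| And of fm & fm
| Or  of fm & fm
| Imp of fm & fm
| Neg of fm
| Zero
| One.

(* A language L_-> : a subset of {and,or,->,not,0,1} containing ->.
   The implication is always present; the other symbols are flagged. *)
Record lang := Lang {
  has_and : bool; has_or : bool; has_neg : bool; has_zero : bool; has_one : bool }.

Fixpoint in_lang (L : lang) (phi : fm) : bool :=
  match phi with
  | Var _ => true
  | And a b => has_and L && in_lang L a && in_lang L b
  | Or a b => has_or L && in_lang L a && in_lang L b
  | Imp a b => in_lang L a && in_lang L b
  | Neg a => has_neg L && in_lang L a
  | Zero => has_zero L
  | One => has_one L
  end.

Fixpoint occurs (n : nat) (phi : fm) : bool :=
  match phi with
  | Var m => m == n
  | And a b | Or a b | Imp a b => occurs n a || occurs n b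
  | Neg a => occurs n a
  | Zero | One => false
  end.

Fixpoint positive (phi : fm) : bool :=
  match phi with
  | Var _ => true
  | And a b | Or a b => positive a && positive b
  | Imp a b => negative a && positive b
  | Neg a => negative a
  | Zero | One => true
  end
with negative (phi : fm) : bool :=
  match phi with
  | Var _ => false
  | And a b | Or a b => negative a && negative b
  | Imp a b => positive a && negative b
  | Neg a => positive a
  | Zero | One => true
  end.

Fixpoint sahl_ante (phi : fm) : bool :=
  negative phi ||
  match phi with
  | Var _ | Zero | One => true
  | And a b | Or a b => sahl_ante a && sahl_ante b
  | _ => false
  end.

Definition sahl_imp (phi : fm) : bool :=
  positive phi ||
  match phi with
  | Neg a => sahl_ante a
  | Imp a b => sahl_ante a && positive b
  | _ => false
  end.

Fixpoint sahl_body (phi : fm) : bool :=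
  sahl_imp phi ||
  match phi with
  | And a b | Or a b => sahl_body a && sahl_body b
  | _ => false
  end.

(* A Sahlqvist quasiequation
     phi_1 /\ y <= z & ... & phi_m /\ y <= z  ==>  y <= z
   is represented by the list [phi_1; ...; phi_m] and the variables y, z. *)
Record quasi := Quasi { q_phis : seq fm; q_y : nat; q_z : nat }.

Definition sahlqvist_quasi_in (L : lang) (Q : quasi) : Prop :=
  [/\ 0 < size (q_phis Q),
      q_y Q != q_z Q,
      all (fun phi => ~~ occurs (q_y Q) phi && ~~ occurs (q_z Q) phi) (q_phis Q),
      all sahl_body (q_phis Q)
    & all (in_lang L) (q_phis Q)].

(* the variable x_m^j (fresh copies); all of them are different from
   variable 0, which is used as the fresh variable y of A(Phi). *)
Definition copy (m j : nat) : nat := 2 ^ m * (2 * j + 1).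

Fixpoint trk (k : nat) (phi : fm) : seq fm :=
  match phi with
  | Var m => [seq Var (copy m j) | j <- iota 1 k]
  | One => [:: Imp (Var (copy 0 1)) (Var (copy 0 1))]
  | Zero => [:: Var (copy 0 1); Imp (Var (copy 0 1)) Zero]
  | And a b => trk k a ++ trk k b
  | Neg a => [:: foldr Imp Zero (trk k a)]
  | Imp a b => [seq foldr Imp chi (trk k a) | chi <- trk k b]
  | Or a b => [seq Or psi chi | psi <- trk k a, chi <- trk k b]
  end.

(* the unique member of  ((phi_1^k -> y) u ... u (phi_m^k -> y)) -> y *)
Definition A_form (Q : quasi) (k : nat) : fm :=
  let y := Var 0 in
  foldr Imp y [seq foldr Imp y (trk k phi) | phi <- q_phis Q].

Definition A_set (Q : quasi) (theta : fm) : Prop :=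
  exists2 k, 0 < k & theta = A_form Q k.

Record heyting := Heyting {
  hcar :> Type;
  hle : hcar -> hcar -> Prop;
  hmeet : hcar -> hcar -> hcar;
  hjoin : hcar -> hcar -> hcar;
  himp : hcar -> hcar -> hcar;
  hbot : hcar;
  htop : hcar;
  hle_refl : forall a, hle a a;
  hle_trans : forall a b c, hle a b -> hle b c -> hle a c;
  hle_anti : forall a b, hle a b -> hle b a -> a = b;
  hmeetP : forall a b c, hle c (hmeet a b) <-> (hle c a /\ hle c b);
  hjoinP : forall a b c, hle (hjoin a b) c <-> (hle a c /\ hle b c);
  hbotP : forall a, hle hbot a;
  htopP : forall a, hle a htop;
  himpP : forall a b c, hle (hmeet a b) c <-> hle a (himp b c) }.

Fixpoint heval (H : heyting) (v : nat -> H) (phi : fm) : H :=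
  match phi with
  | Var n => v n
  | And a b => hmeet (heval v a) (heval v b)
  | Or a b => hjoin (heval v a) (heval v b)
  | Imp a b => himp (heval v a) (heval v b)
  | Neg a => himp (heval v a) (hbot H)
  | Zero => hbot H
  | One => htop H
  end.

Definition subreduct (L : lang) (H : heyting) (S : H -> Prop) : Prop :=
  (exists a, S a) /\
  (forall a b, S a -> S b -> S (himp a b)) /\
  (has_and L -> forall a b, S a -> S b -> S (hmeet a b)) /\
  (has_or L -> forall a b, S a -> S b -> S (hjoin a b)) /\
  (has_neg L -> forall a, S a -> S (himp a (hbot H))) /\
  (has_zero L -> S (hbot H)) /\
  (has_one L -> S (htop H)).

Definition sub_valid (H : heyting) (S : H -> Prop) (phi : fm) : Prop :=
  forall v : nat -> H, (forall n, S (v n)) -> heval v phi = htop H.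

Record lalg := LAlg {
  acar :> Type;
  aimp : acar -> acar -> acar;
  aand : option (acar -> acar -> acar);
  aor : option (acar -> acar -> acar);
  aneg : option (acar -> acar);
  azero : option acar;
  aone : option acar }.

Definition has_sig (L : lang) (B : lalg) : Prop :=
  [/\ isSome (aand B) = has_and L, isSome (aor B) = has_or L,
      isSome (aneg B) = has_neg L, isSome (azero B) = has_zero L
    & isSome (aone B) = has_one L].

(* B is in V(A), A the L-subreduct S of H: B is a homomorphic image (under f)
   of a subalgebra P of a power A^I (elements of A^I are maps I -> H with
   values in S, operations pointwise). *)
Definition in_variety (L : lang) (H : heyting) (S : H -> Prop) (B : lalg) : Prop :=
  has_sig L B /\
  exists (I : Type) (P : (I -> H) -> Prop) (f : (I -> H) -> B),
  (forall x, P x -> forall i, S (x i)) /\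
  (forall x y, P x -> P y ->
        P (fun i => himp (x i) (y i)) /\
        f (fun i => himp (x i) (y i)) = aimp (f x) (f y)) /\
  (forall g, aand B = Some g -> forall x y, P x -> P y ->
        P (fun i => hmeet (x i) (y i)) /\
        f (fun i => hmeet (x i) (y i)) = g (f x) (f y)) /\
  (forall g, aor B = Some g -> forall x y, P x -> P y ->
        P (fun i => hjoin (x i) (y i)) /\
        f (fun i => hjoin (x i) (y i)) = g (f x) (f y)) /\
  (forall g, aneg B = Some g -> forall x, P x ->
        P (fun i => himp (x i) (hbot H)) /\
        f (fun i => himp (x i) (hbot H)) = g (f x)) /\
  (forall d, azero B = Some d ->
        P (fun _ => hbot H) /\ f (fun _ => hbot H) = d) /\
  (forall d, aone B = Some d ->
        P (fun _ => htop H) /\ f (fun _ => htop H) = d) /\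
  (forall b : B, exists2 x, P x & f x = b).

(* 1 = a -> a (constant in such algebras) *)
Definition impl_filter (B : lalg) (F : B -> Prop) : Prop :=
  (forall a : B, F (aimp a a)) /\
  (forall a b : B, F a -> F (aimp a b) -> F b).

Definition meet_irr_filter (B : lalg) (F : B -> Prop) : Prop :=
  [/\ impl_filter F,
      exists b : B, ~ F b
    & forall G1 G2 : B -> Prop, impl_filter G1 -> impl_filter G2 ->
        (forall x, F x <-> (G1 x /\ G2 x)) ->
        (forall x, G1 x <-> F x) \/ (forall x, G2 x <-> F x)].

Definition filt_star (B : lalg) : Type := {F : B -> Prop | meet_irr_filter F}.

Definition filt_le (B : lalg) (F G : filt_star B) : Prop :=
  forall x, proj1_sig F x -> proj1_sig G x.

Definition upset (X : Type) (le : X -> X -> Prop) (U : X -> Prop) : Prop :=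
  forall x y, le x y -> U x -> U y.

Fixpoint upeval (X : Type) (le : X -> X -> Prop) (v : nat -> X -> Prop)
    (phi : fm) : X -> Prop :=
  match phi with
  | Var n => v n
  | And a b => fun x => upeval le v a x /\ upeval le v b x
  | Or a b => fun x => upeval le v a x \/ upeval le v b x
  | Imp a b => fun x => forall y, le x y -> upeval le v a y -> upeval le v b y
  | Neg a => fun x => forall y, le x y -> ~ upeval le v a y
  | Zero => fun _ => False
  | One => fun _ => True
  end.

Definition Up_sat_quasi (X : Type) (le : X -> X -> Prop) (Q : quasi) : Prop :=
  forall v : nat -> X -> Prop, (forall n, upset le (v n)) ->
    (forall phi, In phi (q_phis Q) ->
       forall x, upeval le v phi x /\ v (q_y Q) x -> v (q_z Q) x) ->
    forall x, v (q_y Q) x -> v (q_z Q) x.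

(* X |= tr(Phi) : by definition of tr, equivalent to Up(X) |= Phi *)
Definition sat_tr (X : Type) (le : X -> X -> Prop) (Q : quasi) : Prop :=
  Up_sat_quasi le Q.

(* Main.v *)
Require Import Defs.
From Stdlib Require Import List.
From mathcomp Require Import all_boot zify.
From Stdlib Require Import Classical ProofIrrelevance ClassicalEpsilon FunctionalExtensionality.
From mathcomp Require classical_sets boolp.
Set Implicit Arguments. Unset Strict Implicit. Unset Printing Implicit Defensive.


Section HLemmas.
Variable H : heyting.
Notation le := (@hle H).

Lemma hmeet_l (a b : H) : le (hmeet a b) a.
Proof. by have /hmeetP [] := hle_refl (hmeet a b). Qed.
Lemma hmeet_r (a b : H) : le (hmeet a b) b.
Proof. by have /hmeetP [] := hle_refl (hmeet a b). Qed.
Lemma hmeet_glb (a b c : H) : le c a -> le c b -> le c (hmeet a b).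
Proof. by move=> ? ?; apply/hmeetP. Qed.
Lemma hjoin_l (a b : H) : le a (hjoin a b).
Proof. by have /hjoinP [] := hle_refl (hjoin a b). Qed.
Lemma hjoin_r (a b : H) : le b (hjoin a b).
Proof. by have /hjoinP [] := hle_refl (hjoin a b). Qed.
Lemma hmp (a b : H) : le (hmeet (himp a b) a) b.
Proof. by apply/himpP; apply: hle_refl. Qed.
Lemma himp_intro (a b c : H) : le (hmeet c a) b -> le c (himp a b).
Proof. by move/himpP. Qed.
Lemma top_eq (x : H) : le (htop H) x -> x = htop H.
Proof. by move=> h; apply: hle_anti => //; apply: htopP. Qed.
Lemma imp_top (a b : H) : le a b -> himp a b = htop H.
Proof.
move=> h; apply: top_eq; apply: himp_intro.
exact: hle_trans (hmeet_r _ _) h.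
Qed.
Lemma le_mp (c a b : H) : le c a -> le c (himp a b) -> le c b.
Proof.
move=> h1 h2; apply: hle_trans (hmp a b); exact: hmeet_glb.
Qed.
Lemma himp_top_l (b : H) : himp (htop H) b = htop H -> b = htop H.
Proof.
move=> h; apply: top_eq; apply: (@le_mp _ (htop H)); first exact: hle_refl.
by rewrite h; apply: hle_refl.
Qed.
Lemma himp_refl (a : H) : himp a a = htop H.
Proof. exact/imp_top/hle_refl. Qed.

Lemma lawK (a b : H) : himp a (himp b a) = htop H.
Proof. apply: imp_top; apply: himp_intro; exact: hmeet_l. Qed.
Lemma lawS (t a b : H) :
  himp (himp t (himp a b)) (himp (himp t a) (himp t b)) = htop H.
Proof.
apply: imp_top; apply: himp_intro; apply: himp_intro.
set c := hmeet _ _.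
have ht : le c t by exact: hmeet_r.
have h1 : le c (himp t (himp a b)).
  exact: hle_trans (hmeet_l _ _) (hmeet_l _ _).
have h2 : le c (himp t a).
  exact: hle_trans (hmeet_l _ _) (hmeet_r _ _).
apply: (@le_mp _ a); first exact: le_mp h2.
exact: le_mp h1.
Qed.
Lemma lawT (t a : H) : himp t (himp a a) = htop H.
Proof. by rewrite himp_refl; apply: imp_top; apply: htopP. Qed.
Lemma lawOr1 (a b : H) : himp a (hjoin a b) = htop H.
Proof. exact/imp_top/hjoin_l. Qed.
Lemma lawOr2 (a b : H) : himp b (hjoin a b) = htop H.
Proof. exact/imp_top/hjoin_r. Qed.
Lemma hmeet_sym (a b : H) : le (hmeet a b) (hmeet b a).
Proof. apply: hmeet_glb; [exact: hmeet_r | exact: hmeet_l]. Qed.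
Lemma lawOr3 (a b c : H) :
  himp (himp a c) (himp (himp b c) (himp (hjoin a b) c)) = htop H.
Proof.
apply: imp_top; apply: himp_intro; apply: himp_intro.
apply: hle_trans (hmeet_sym _ _) _; apply/himpP.
apply/hjoinP; split; apply/himpP.
- apply: (@le_mp _ a); first exact: hmeet_l.
  apply: hle_trans (hmeet_r _ _) _; exact: hmeet_l.
- apply: (@le_mp _ b); first exact: hmeet_l.
  apply: hle_trans (hmeet_r _ _) _; exact: hmeet_r.
Qed.
Lemma lawNeg1 (a b : H) : himp a (himp (himp a (hbot H)) b) = htop H.
Proof.
apply: imp_top; apply: himp_intro.
apply: hle_trans _ (hbotP b).
apply: (@le_mp _ a); first exact: hmeet_l.
exact: hmeet_r.
Qed.
Lemma lawNeg2 (a : H) :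
  himp (himp a (himp a (hbot H))) (himp a (hbot H)) = htop H.
Proof.
apply: imp_top; apply: himp_intro.
apply: (@le_mp _ a); first exact: hmeet_r.
apply: (@le_mp _ a); first exact: hmeet_r.
exact: hmeet_l.
Qed.
End HLemmas.


Definition bor (B : lalg) (a b : B) : B :=
  match aor B with Some g => g a b | None => a end.
Definition bneg (B : lalg) (a : B) : B :=
  match aneg B with Some n => n a
  | None => match azero B with Some z => aimp a z | None => a end end.

Fixpoint beval (B : lalg) (e : nat -> B) (phi : fm) : B :=
  match phi with
  | Var n => e n
  | And a b => beval e a
  | Or a b => bor (beval e a) (beval e b)
  | Imp a b => match b with
               | Zero => bneg (beval e a)
               | _ => aimp (beval e a) (beval e b) end
  | Neg a => bneg (beval e a)
  | Zero => match azero B with Some z => z | None => e 0 end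
  | One => e 0
  end.

Fixpoint expr (B : lalg) (phi : fm) : Prop :=
  match phi with
  | Var _ => True
  | Imp a b => expr B a /\ match b with
                  | Zero => isSome (aneg B) || isSome (azero B)
                  | _ => expr B b end
  | Or a b => isSome (aor B) /\ expr B a /\ expr B b
  | Neg a => isSome (aneg B) /\ expr B a
  | Zero => isSome (azero B)
  | _ => False
  end.

Lemma beval_imp (B : lalg) (e : nat -> B) a b : b <> Zero ->
  beval e (Imp a b) = aimp (beval e a) (beval e b).
Proof. by case: b. Qed.

Lemma choice_fun (A C : Type) (R : A -> C -> Prop) :
  (forall a, exists c, R a c) -> exists g : A -> C, forall a, R a (g a).
Proof.
move=> h; exists (fun a => proj1_sig (constructive_indefinite_description _ (h a))).
move=> a; exact: proj2_sig (constructive_indefinite_description _ (h a)).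
Qed.

Section Variety.
Variables (H : heyting) (S : H -> Prop) (B : lalg) (I : Type)
  (P : (I -> H) -> Prop) (f : (I -> H) -> B).
Hypothesis hP : forall x, P x -> forall i, S (x i).
Hypothesis hImp : forall x y, P x -> P y ->
        P (fun i => himp (x i) (y i)) /\
        f (fun i => himp (x i) (y i)) = aimp (f x) (f y).
Hypothesis hOr : forall g, aor B = Some g -> forall x y, P x -> P y ->
        P (fun i => hjoin (x i) (y i)) /\
        f (fun i => hjoin (x i) (y i)) = g (f x) (f y).
Hypothesis hNeg : forall g, aneg B = Some g -> forall x, P x ->
        P (fun i => himp (x i) (hbot H)) /\
        f (fun i => himp (x i) (hbot H)) = g (f x).
Hypothesis hZero : forall d, azero B = Some d ->
        P (fun _ => hbot H) /\ f (fun _ => hbot H) = d.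
Hypothesis hsurj : forall b : B, exists2 x, P x & f x = b.

Lemma comm_neg (x : I -> H) : P x -> isSome (aneg B) || isSome (azero B) ->
  P (fun i => himp (x i) (hbot H)) /\ f (fun i => himp (x i) (hbot H)) = bneg (f x).
Proof.
move=> Px; rewrite /bneg; case E: (aneg B) => [g|] /=.
  by move=> _; exact: (hNeg E Px).
case Z: (azero B) => [d|] //= _.
have [Pd fd] := (hZero Z).
by have [Pi fi] := hImp Px Pd; rewrite -fd; split.
Qed.

Lemma comm phi : expr B phi -> forall x : nat -> I -> H, (forall n, P (x n)) ->
  P (fun i => heval (fun n => x n i) phi) /\
  f (fun i => heval (fun n => x n i) phi) = beval (fun n => f (x n)) phi.
Proof.
elim: phi => [n|a IHa b IHb|a IHa b IHb|a IHa b IHb|a IHa||] /= E x Px.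
- by split; [exact: Px|].
- by case: E.
- case: E => hs [Ea Eb]; move: hs; rewrite /bor.
  case G: (aor B) => [g|] //= _.
  have [Pa fa] := IHa Ea x Px; have [Pb fb] := IHb Eb x Px.
  by have [Pj fj] := hOr G Pa Pb; split; [exact: Pj | rewrite -fa -fb; exact: fj].
- case: E => Ea Eb; have [Pa fa] := IHa Ea x Px.
  destruct b;
   try (have [Pb fb] := IHb Eb x Px; have [Pj fj] := hImp Pa Pb;
        by split; [exact: Pj | rewrite fj fa fb]).
  by have [Pj fj] := comm_neg Pa Eb; split; [exact: Pj | rewrite /= -fa; exact: fj].
- case: E => En Ea; have [Pa fa] := IHa Ea x Px.
  by have [Pj fj] := comm_neg Pa (introT orP (or_introl En)); split; [exact: Pj | rewrite -fa; exact: fj].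
- move: E; case Z: (azero B) => [d|] //= _; exact: (hZero Z).
- by case: E.
Qed.

Lemma transfer phi : expr B phi ->
  (forall v : nat -> H, (forall n, S (v n)) -> heval v phi = htop H) ->
  forall (e : nat -> B) (b : B), beval e phi = aimp b b.
Proof.
move=> E hv e b.
have [pre hpre] : exists g : nat -> I -> H, forall n, P (g n) /\ f (g n) = e n.
  apply: (@choice_fun nat (I -> H) (fun n g => P g /\ f g = e n)) => n.
  by have [x Px fx] := hsurj (e n); exists x.
have [xb Pxb fxb] := hsurj b.
have Ppre : forall n, P (pre n) by move=> n; case: (hpre n).
have [_ fc] := comm E Ppre.
have -> : e = (fun n => f (pre n)) by apply: functional_extensionality => n; case: (hpre n).
rewrite -fc -fxb.
have [_ <-] := hImp Pxb Pxb.
congr f; apply: functional_extensionality => i.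
rewrite himp_refl; apply: hv => n; exact: hP (Ppre n) i.
Qed.
End Variety.

Record hlaws (B : lalg) : Prop := HLaws {
 hl1 : forall a b : B, aimp a a = aimp b b;
 hlK : forall a b c : B, aimp a (aimp b a) = aimp c c;
 hlS : forall t a b c : B, aimp (aimp t (aimp a b)) (aimp (aimp t a) (aimp t b)) = aimp c c;
 hlT : forall t a c : B, aimp t (aimp a a) = aimp c c;
 hlOr1 : isSome (aor B) -> forall a b c : B, aimp a (bor a b) = aimp c c;
 hlOr2 : isSome (aor B) -> forall a b c : B, aimp b (bor a b) = aimp c c;
 hlOr3 : isSome (aor B) -> forall a b d c : B,
     aimp (aimp a d) (aimp (aimp b d) (aimp (bor a b) d)) = aimp c c;
 hlN1 : isSome (aneg B) || isSome (azero B) -> forall a b c : B,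
     aimp a (aimp (bneg a) b) = aimp c c;
 hlN2 : isSome (aneg B) || isSome (azero B) -> forall a c : B,
     aimp (aimp a (bneg a)) (bneg a) = aimp c c }.

Definition env3 (B : lalg) (a b c : B) : nat -> B :=
  fun n => if n == 0 then a else if n == 1 then b else c.

Lemma variety_laws (L : lang) (H : heyting) (S : H -> Prop) (B : lalg) :
  in_variety L S B -> hlaws B.
Proof.
case=> _ [I [P [f [hP [hImp [_ [hOr [hNeg [hZero [_ hsurj]]]]]]]]]].
have T := @transfer _ _ _ _ _ _ hP hImp hOr hNeg hZero hsurj.
split.
- move=> a b; refine (T (Imp (Var 0) (Var 0)) _ _ (env3 a a a) b);
    [simpl; tauto | move=> v _; exact: himp_refl].
- move=> a b c; refine (T (Imp (Var 0) (Imp (Var 1) (Var 0))) _ _ (env3 a b a) c);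
    [simpl; tauto | move=> v _; exact: lawK].
- move=> t a b c; refine (T (Imp (Imp (Var 0) (Imp (Var 1) (Var 2)))
      (Imp (Imp (Var 0) (Var 1)) (Imp (Var 0) (Var 2)))) _ _ (env3 t a b) c);
    [simpl; tauto | move=> v _; exact: lawS].
- move=> t a c; refine (T (Imp (Var 0) (Imp (Var 1) (Var 1))) _ _ (env3 t a a) c);
    [simpl; tauto | move=> v _; exact: lawT].
- move=> hs a b c; refine (T (Imp (Var 0) (Or (Var 0) (Var 1))) _ _ (env3 a b a) c);
    [simpl; tauto | move=> v _; exact: lawOr1].
- move=> hs a b c; refine (T (Imp (Var 1) (Or (Var 0) (Var 1))) _ _ (env3 a b a) c);
    [simpl; tauto | move=> v _; exact: lawOr2].
- move=> hs a b d c; refine (T (Imp (Imp (Var 0) (Var 2)) (Imp (Imp (Var 1) (Var 2))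
      (Imp (Or (Var 0) (Var 1)) (Var 2)))) _ _ (env3 a b d) c);
    [simpl; tauto | move=> v _; exact: lawOr3].
- move=> hs a b c; refine (T (Imp (Var 0) (Imp (Imp (Var 0) Zero) (Var 1))) _ _ (env3 a b a) c);
    [simpl; tauto | move=> v _; exact: lawNeg1].
- move=> hs a c; refine (T (Imp (Imp (Var 0) (Imp (Var 0) Zero)) (Imp (Var 0) Zero)) _ _ (env3 a a a) c);
    [simpl; tauto | move=> v _; exact: lawNeg2].
Qed.


Definition chain (B : lalg) (l : seq B) (b : B) : B := foldr (@aimp B) b l.

Section Filters.
Variables (B : lalg) (hL : hlaws B).

Lemma filt_law (F : B -> Prop) x : impl_filter F -> x = aimp x x -> F x.
Proof. by move=> [h1 _] ->. Qed.

Definition Kt (F : B -> Prop) (t : B) : B -> Prop := fun b => F (aimp t b).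

Lemma Kt_filter F t : impl_filter F -> impl_filter (Kt F t).
Proof.
move=> hF; have [h1 h2] := hF; split.
- move=> a; rewrite /Kt; apply: (filt_law hF); exact: (hlT hL).
- move=> a b ha hab; rewrite /Kt in ha hab *.
  have hs : F (aimp (aimp t (aimp a b)) (aimp (aimp t a) (aimp t b))).
    by apply: filt_law => //; exact: (hlS hL).
  exact: h2 (h2 _ _ hab hs).
Qed.

Lemma Kt_sub F t b : impl_filter F -> F b -> Kt F t b.
Proof.
move=> hF hb; have [h1 h2] := hF; apply: h2 hb _; apply: (filt_law hF); exact: (hlK hL).
Qed.

Lemma Kt_t F t : impl_filter F -> Kt F t t.
Proof. by case=> h1 _; exact: h1. Qed.

Definition Kl (F : B -> Prop) (l : seq B) : B -> Prop := fun b => F (chain l b).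

Lemma Kl_cons F t l b : Kl F (t :: l) b <-> Kl (Kt F t) l b.
Proof. by []. Qed.

Lemma Kl_filter l : forall F, impl_filter F -> impl_filter (Kl F l).
Proof.
elim: l => [|t l IH] F hF; first by [].
have := IH _ (Kt_filter t hF); by [].
Qed.

Lemma Kl_sub l : forall F b, impl_filter F -> F b -> Kl F l b.
Proof.
elim: l => [|t l IH] F b hF hb //.
apply/Kl_cons; apply: IH; first exact: Kt_filter.
exact: Kt_sub.
Qed.

Lemma Kl_in l : forall F t, impl_filter F -> In t l -> Kl F l t.
Proof.
elim: l => [|s l IH] F t hF //= [<-|ht].
- apply/Kl_cons; apply: Kl_sub; first exact: Kt_filter.
  exact: Kt_t.
- apply/Kl_cons; apply: IH => //; exact: Kt_filter.
Qed.

Lemma Kl_mp l : forall F b, impl_filter F -> (forall t, In t l -> F t) ->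
  Kl F l b -> F b.
Proof.
elim: l => [|t l IH] F b hF hl //= hb.
have hK : Kt F t b.
  apply: IH (Kt_filter t hF) _ hb => s hs; apply: Kt_sub => //; apply: hl; by right.
have [_ h2] := hF; apply: h2 hK; apply: hl; by left.
Qed.

Lemma Kl_mono l (F G : B -> Prop) b : (forall x, F x -> G x) -> Kl F l b -> Kl G l b.
Proof. by move=> h; apply: h. Qed.

Lemma improper (F : B -> Prop) a : impl_filter F ->
  isSome (aneg B) || isSome (azero B) -> F a -> F (bneg a) -> forall b, F b.
Proof.
move=> hF hs ha hn b; have [_ h2] := hF.
apply: (h2 _ _ hn); apply: (h2 _ _ ha); apply: (filt_law hF); exact: (hlN1 hL hs).
Qed.

Definition good (E : B -> Prop) (N : seq B -> Prop) (F : B -> Prop) :=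
  [/\ impl_filter F, (forall b, E b -> F b) & forall n, N n -> ~ (forall t, In t n -> F t)].

Lemma zorn_ext (E : B -> Prop) (N : seq B -> Prop) :
  impl_filter E ->
  (forall n, N n -> ~ (forall t, In t n -> E t)) ->
  (forall n1 n2, N n1 -> N n2 -> exists n, N n /\ forall F, impl_filter F ->
       ((forall t, In t n1 -> F t) \/ (forall t, In t n2 -> F t)) ->
       forall t, In t n -> F t) ->
  (exists n, N n) ->
  exists M, [/\ meet_irr_filter M, (forall b, E b -> M b) &
                forall n, N n -> ~ (forall t, In t n -> M t)].
Proof.
move=> hE hNE hdir [n0 Nn0].
pose T := {F : B -> Prop | good E N F}.
have gE : good E N E by split.
pose t0 : T := exist _ E gE.
pose R : rel T := fun s t => boolp.asbool (forall x, proj1_sig s x -> proj1_sig t x).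
have [| | |t tmax] := @classical_sets.ZL_preorder T t0 R.
- by move=> s; apply/boolp.asboolP.
- move=> r s t /boolp.asboolP h1 /boolp.asboolP h2; apply/boolp.asboolP => x hx.
  exact: h2 (h1 _ hx).
- move=> A Atot.
  pose U := fun x => E x \/ exists s, A s /\ proj1_sig s x.
  have fin : forall n, (forall t, In t n -> U t) ->
     (forall t, In t n -> E t) \/ exists s, A s /\ forall t, In t n -> proj1_sig s t.
    elim=> [|a n IH] hn; first by left.
    have [hE'|[s [As hs]]] := IH (fun t ht => hn t (or_intror ht)).
    + case: (hn a (or_introl erefl)) => [Ea|[s [As sa]]].
      * left => t [<-|ht] //; exact: hE' t ht.
      * right; exists s; split => // t [<-|ht] //.
        case: (proj2_sig s) => _ hs _; exact: hs (hE' t ht).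
    + case: (hn a (or_introl erefl)) => [Ea|[s' [As' sa]]].
      * right; exists s; split => // t [<-|ht]; last exact: hs.
        case: (proj2_sig s) => _ hs' _; exact: hs'.
      * case: (Atot s s' As As') => /boolp.asboolP hss'.
        - right; exists s'; split => // t [<-|ht] //; exact: hss' (hs t ht).
        - right; exists s; split => // t [<-|ht]; [exact: hss' | exact: hs].
  have gU : good E N U.
    split; last first.
    + move=> n Nn hn; case: (fin n hn) => [hEn|[s [As hs]]].
      * exact: hNE Nn hEn.
      * by case: (proj2_sig s) => _ _ h; exact: h n Nn hs.
    + by move=> b hb; left.
    + split.
      * by move=> a; left; case: hE => h1 _; exact: h1.
      * move=> a b ha hab.
        have hl : forall t, In t [:: a; aimp a b] -> U t by move=> t [<-|[<-|[]]].
        case: (fin _ hl) => [h|[s [As h]]].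
        - left; case: hE => _ h2; apply: h2 (h a _) (h _ _); simpl; tauto.
        - right; exists s; split => //.
          case: (proj2_sig s) => [[_ h2] _ _]; apply: h2 (h a _) (h _ _); simpl; tauto.
  exists (exist _ U gU) => s As; apply/boolp.asboolP => x hx /=; right; by exists s.
- exists (proj1_sig t); case: (proj2_sig t) => hM hEM hNM.
  split => //; split => //.
  + apply: NNPP => hall.
    apply: (hNM n0 Nn0) => x _; apply: NNPP => hx; apply: hall; by exists x.
  + move=> G1 G2 hG1 hG2 hM12.
    have sub1 : forall x, proj1_sig t x -> G1 x by move=> x /hM12 [].
    have sub2 : forall x, proj1_sig t x -> G2 x by move=> x /hM12 [].
    have key : forall G, impl_filter G -> (forall x, proj1_sig t x -> G x) ->
        (forall x, G x <-> proj1_sig t x) \/ exists n, N n /\ forall t, In t n -> G t.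
      move=> G hG sub.
      case: (classic (exists n, N n /\ forall t, In t n -> G t)) => hn; [by right|left].
      have gG : good E N G.
        split => // [b hb|n Nn hall]; first exact: sub (hEM _ hb).
        by apply: hn; exists n.
      have /boolp.asboolP hGt := tmax (exist _ G gG) (introT (boolp.asboolP _) sub).
      by move=> x; split; [exact: hGt | exact: sub].
    case: (key G1 hG1 sub1) => [h|[n1 [N1 h1]]]; first by left.
    case: (key G2 hG2 sub2) => [h|[n2 [N2 h2]]]; first by right.
    have [n [Nn hn]] := hdir _ _ N1 N2.
    exfalso; apply: (hNM n Nn) => x hx; apply/hM12; split.
    * exact: hn G1 hG1 (or_introl h1) x hx.
    * exact: hn G2 hG2 (or_intror h2) x hx.
Qed.

Lemma separation (F : B -> Prop) c : impl_filter F -> ~ F c ->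
  exists M, [/\ meet_irr_filter M, (forall b, F b -> M b) & ~ M c].
Proof.
move=> hF hc.
have [|||M [hM hFM hN]] := @zorn_ext F (fun n => n = [:: c]) hF.
- by move=> n -> h; apply: hc; apply: h; left.
- move=> n1 n2 -> ->; exists [:: c]; split => // G _ [h|h] t [<-|[]];
    by apply: h; left.
- by exists [:: c].
- exists M; split => // hMc; apply: (hN _ erefl) => t [<-|[]] //.
Qed.

Section Point.
Variable (H0 : B -> Prop) (hH : meet_irr_filter H0).

Lemma pt_filter : impl_filter H0. Proof. by case: hH. Qed.
Lemma pt_proper : exists b, ~ H0 b. Proof. by case: hH. Qed.

Lemma pair_lemma a b : ~ H0 a -> ~ H0 b ->
  exists c, [/\ ~ H0 c, H0 (aimp a c) & H0 (aimp b c)].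
Proof.
move=> ha hb; apply: NNPP => hno.
case: hH => hF _ hirr.
have := hirr (Kt H0 a) (Kt H0 b) (Kt_filter a hF) (Kt_filter b hF).
case.
- move=> x; split => [hx|[h1 h2]]; first by split; apply: Kt_sub.
  apply: NNPP => hx; apply: hno; by exists x.
- by move=> /(_ a) [/(_ (Kt_t a hF))].
- by move=> /(_ b) [/(_ (Kt_t b hF))].
Qed.

Lemma clemma (ts : seq B) : (forall t, In t ts -> ~ H0 t) ->
  exists c, ~ H0 c /\ forall t, In t ts -> H0 (aimp t c).
Proof.
elim: ts => [|t ts IH] hts.
  by have [b hb] := pt_proper; exists b.
have [c' [hc' hc'2]] := IH (fun s hs => hts s (or_intror hs)).
have [c [hc h1 h2]] := pair_lemma (hts t (or_introl erefl)) hc'.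
exists c; split => // s [<-|hs] //.
have hF := pt_filter.
have hK := Kt_filter s hF; case: hK => _ hK2.
apply: (hK2 c') (hc'2 s hs) _.
exact: Kt_sub.
Qed.

Lemma primality a b : isSome (aor B) -> H0 (bor a b) -> H0 a \/ H0 b.
Proof.
move=> hs hab; apply: NNPP => hno.
have ha : ~ H0 a by move=> h; apply: hno; left.
have hb : ~ H0 b by move=> h; apply: hno; right.
have [c [hc h1 h2]] := pair_lemma ha hb.
apply: hc; have [_ hmp] := pt_filter.
apply: (hmp _ _ hab); apply: (hmp _ _ h2); apply: (hmp _ _ h1).
apply: filt_law; [exact: pt_filter | exact: (hlOr3 hL hs)].
Qed.

Lemma union_points (Gs : seq (B -> Prop)) :
  (forall G, In G Gs -> impl_filter G) ->
  (forall G, In G Gs -> exists a, G a /\ ~ H0 a) ->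
  exists d, (forall G, In G Gs -> G d) /\ ~ H0 d.
Proof.
elim: Gs => [|G Gs IH] hf hn.
  by have [b hb] := pt_proper; exists b.
have [d' [hd' nd']] := IH (fun G h => hf G (or_intror h)) (fun G h => hn G (or_intror h)).
have [a [Ga na]] := hn G (or_introl erefl).
have [c [nc h1 h2]] := pair_lemma na nd'.
exists (chain [:: aimp a c; aimp d' c] c); split.
- have key : forall G' x, impl_filter G' -> G' x -> G' (chain [:: aimp x c; aimp d' c] c).
    move=> G' x hG' hx.
    have hK := Kl_filter [:: aimp x c; aimp d' c] hG'.
    case: (hK) => _ hmp.
    apply: (hmp x); first exact: Kl_sub.
    by apply: Kl_in => //; left.
  move=> G' [<-|hG'].
  + exact: key (hf G (or_introl erefl)) Ga.
  + have hK := Kl_filter [:: aimp a c; aimp d' c] (hf G' (or_intror hG')).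
    case: (hK) => _ hmp.
    have hG'f := hf G' (or_intror hG').
    apply: (hmp d'); first by apply: Kl_sub => //; exact: hd'.
    by apply: Kl_in => //; right; left.
- move=> hd; apply: nc; apply: (Kl_mp (F := H0) pt_filter _ hd).
  by move=> t [<-|[<-|[]]].
Qed.
End Point.
End Filters.


Lemma In_cat (T : Type) (x : T) (s1 s2 : seq T) : In x (s1 ++ s2) <-> In x s1 \/ In x s2.
Proof.
elim: s1 => [|y s1 IH] /=; first by split; [right|case].
rewrite IH; tauto.
Qed.

Lemma In_map (T U : Type) (f : T -> U) (y : U) (s : seq T) :
  In y (map f s) <-> exists x, In x s /\ y = f x.
Proof.
elim: s => [|x s IH] /=; first by split => // [[x []]].
rewrite IH; split.
- case=> [<-|[z [hz ->]]]; [by exists x; split; [left|] | by exists z; split; [right|]].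
- case=> z [[<-|hz] ->]; [by left | right; by exists z].
Qed.

Lemma In_flatten (T : Type) (y : T) (ss : seq (seq T)) :
  In y (flatten ss) <-> exists s, In s ss /\ In y s.
Proof.
elim: ss => [|s ss IH] /=; first by split => // [[s []]].
rewrite In_cat IH; split.
- case=> [h|[s' [h1 h2]]]; [by exists s; split; [left|] | by exists s'; split; [right|]].
- case=> s' [[<-|h1] h2]; [by left | right; by exists s'].
Qed.

Lemma In_allpairs (S T U : Type) (g : S -> T -> U) (s : seq S) (t : seq T) z :
  In z [seq g x y | x <- s, y <- t] <-> exists x y, [/\ In x s, In y t & z = g x y].
Proof.
rewrite In_flatten; split.
- case=> l [/In_map [x [hx ->]] /In_map [y [hy ->]]]; by exists x, y.
- case=> x [y [hx hy ->]]; exists [seq g x y | y <- t]; split.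
  + apply/In_map; by exists x.
  + apply/In_map; by exists y.
Qed.

Fixpoint negch (B : lalg) (b0 : B) (s : seq B) : B :=
  match s with
  | [::] => bneg (aimp b0 b0)
  | t :: s' => match s' with [::] => bneg t | _ => aimp t (negch b0 s') end
  end.

Fixpoint mem (B : lalg) (l : nat -> seq B) (b0 : B) (phi : fm) : seq B :=
  match phi with
  | Var m => l m
  | And a b => mem l b0 a ++ mem l b0 b
  | Or a b => [seq bor x y | x <- mem l b0 a, y <- mem l b0 b]
  | Imp a b => [seq chain (mem l b0 a) c | c <- mem l b0 b]
  | Neg a => [:: negch b0 (mem l b0 a)]
  | Zero => [:: b0; bneg b0]
  | One => [:: aimp b0 b0]
  end.

Lemma negch_rcons (B : lalg) (b0 : B) s t : negch b0 (rcons s t) = chain s (bneg t).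
Proof.
elim: s => [|x s IH] //=.
by rewrite -IH; case: s {IH} => //.
Qed.

Lemma chain_rcons (B : lalg) (s : seq B) t b : chain (rcons s t) b = chain s (aimp t b).
Proof. by elim: s => [|x s IH] //=; rewrite /chain /= -/(chain _ _) IH. Qed.

Definition pt (B : lalg) (H : filt_star B) : B -> Prop := proj1_sig H.

Definition wl (B : lalg) (l : nat -> seq B) : nat -> filt_star B -> Prop :=
  fun m H => forall t, In t (l m) -> pt H t.

Section Truth.
Variables (L : lang) (B : lalg) (hL : hlaws B) (hsig : has_sig L B).

Notation X := (filt_star B).
Notation le := (@filt_le B).

Lemma ptF (H : X) : impl_filter (pt H). Proof. by case: H => F [] . Qed.
Lemma ptP (H : X) : meet_irr_filter (pt H). Proof. by case: H. Qed.
Lemma pt_prop (H : X) : exists b, ~ pt H b. Proof. by case: H => F []. Qed.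

Lemma pt_improper (H : X) a : isSome (aneg B) || isSome (azero B) ->
  pt H a -> pt H (bneg a) -> False.
Proof.
move=> hs ha hn; have [b hb] := pt_prop H; apply: hb.
exact: (improper hL (ptF H) hs ha hn).
Qed.

Lemma chain_sep (H : X) s c : ~ pt H (chain s c) ->
  exists G : X, [/\ le H G, (forall t, In t s -> pt G t) & ~ pt G c].
Proof.
move=> hc.
have [M [hM hsub hMc]] := separation (Kl_filter hL s (ptF H)) hc.
exists (exist _ M hM); split => //.
- move=> x hx; apply: hsub; exact: (Kl_sub hL s (ptF H) hx).
- move=> t ht; apply: hsub; exact: (Kl_in hL (ptF H) ht).
Qed.

Lemma chain_in (H G : X) s c : le H G -> pt H (chain s c) ->
  (forall t, In t s -> pt G t) -> pt G c.
Proof.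
move=> hle hc hs; apply: (Kl_mp hL (ptF G) hs); exact: hle.
Qed.

Lemma truth l b0 phi : in_lang L phi -> forall H : X,
  upeval le (wl l) phi H <-> forall t, In t (mem l b0 phi) -> pt H t.
Proof.
case: hsig => sA sO sN sZ sU.
elim: phi => [m|a IHa b IHb|a IHa b IHb|a IHa b IHb|a IHa||] /= hin H.
- by [].
- move/andP: hin => [/andP [_ ia] ib]; rewrite IHa // IHb //; split.
  + by case=> h1 h2 t /In_cat [] ?; [apply: h1|apply: h2].
  + by move=> h; split => t ht; apply: h; apply/In_cat; [left|right].
- move/andP: hin => [/andP [ho ia] ib]; rewrite -sO in ho.
  rewrite IHa // IHb //; split.
  + move=> h t /In_allpairs [x [y [hx hy ->]]].
    have [_ hmp] := ptF H.
    case: h => h.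
    * apply: (hmp _ _ (h x hx)); apply: filt_law (ptF H) _; exact: (hlOr1 hL ho).
    * apply: (hmp _ _ (h y hy)); apply: filt_law (ptF H) _; exact: (hlOr2 hL ho).
  + move=> h; apply: NNPP => hno.
    have [x [hx nx]] : exists x, In x (mem l b0 a) /\ ~ pt H x.
      apply: NNPP => hn; apply: hno; left => x hx; apply: NNPP => nx; apply: hn; by exists x.
    have [y [hy ny]] : exists y, In y (mem l b0 b) /\ ~ pt H y.
      apply: NNPP => hn; apply: hno; right => y hy; apply: NNPP => ny; apply: hn; by exists y.
    have := h (bor x y) (proj2 (In_allpairs _ _ _ _) (ex_intro _ x (ex_intro _ y (And3 hx hy erefl)))).
    by case/(primality hL (ptP H) ho) => //.
- move/andP: hin => [ia ib]; split.
  + move=> h t /In_map [c [hc ->]]; apply: NNPP => hn.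
    have [G [hHG hs nc]] := chain_sep hn.
    have := h G hHG (proj2 (IHa ia G) hs).
    by move/(IHb ib G) => /(_ c hc).
  + move=> h G hHG /(IHa ia G) ha; apply/(IHb ib G) => c hc.
    apply: (chain_in hHG _ ha); apply: h; apply/In_map; by exists c.
- move/andP: hin => [hn ia]; rewrite -sN in hn.
  have hs : isSome (aneg B) || isSome (azero B) by rewrite hn.
  split.
  + move=> h t [<-|[]] //.
    move: (IHa ia) h; case/lastP: (mem l b0 a) => [|s t'] IH h.
    * exfalso; apply: (h H) => [x //|]; by apply/IH.
    * rewrite negch_rcons; apply: NNPP => hc.
      have nK : ~ Kl (pt H) (rcons s t') (bneg t').
        rewrite /Kl chain_rcons => hK; apply: hc.
        have hF := Kl_filter hL s (ptF H); have [_ hmp] := hF.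
        apply: (hmp _ _ hK); apply: filt_law hF _; exact: (hlN2 hL hs).
      have [M [hM hsub hMc]] := separation (Kl_filter hL (rcons s t') (ptF H)) nK.
      apply: (h (exist _ M hM)).
      -- move=> x hx; apply: hsub; exact: (Kl_sub hL _ (ptF H) hx).
      -- apply/IH => x hx; apply: hsub; exact: (Kl_in hL (ptF H) hx).
  + move=> h G hHG /(IHa ia G); have hN := h _ (or_introl erefl).
    have hNG := hHG _ hN.
    move: hNG; case/lastP: (mem l b0 a) => [|s t'] hNG hall.
    * apply: (pt_improper hs _ hNG); have := ptF G; by case.
    * rewrite negch_rcons in hNG.
      have hsG : forall x, In x s -> pt G x.
        by move=> x hx; apply: hall; rewrite -cats1; apply/In_cat; left.
      have htG : pt G t' by apply: hall; rewrite -cats1; apply/In_cat; right; left.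
      apply: (pt_improper hs htG); exact: (Kl_mp hL (ptF G) hsG hNG).
- rewrite -sZ in hin; have hs : isSome (aneg B) || isSome (azero B) by rewrite hin orbT.
  split => // h; apply: (pt_improper hs (h b0 (or_introl erefl))); apply: h; right; left.
- split => [_ t [<-|[]]|_ //]; case: (ptF H) => h1 _; exact: h1.
- split => [_ t [<-|[]]|_ //]; case: (ptF H) => h1 _; exact: h1.
Qed.
End Truth.


Lemma map_ext_In (T U : Type) (f g : T -> U) (s : seq T) :
  (forall x, In x s -> f x = g x) -> map f s = map g s.
Proof.
elim: s => [|x s IH] h //=; rewrite h; last by left.
by rewrite IH // => y hy; apply: h; right.
Qed.

Lemma map_allpairs (S T U V : Type) (h : U -> V) (g : S -> T -> U) s t :
  map h [seq g x y | x <- s, y <- t] = [seq h (g x y) | x <- s, y <- t].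
Proof.
elim: s => [|x s IH] //=; by rewrite map_cat IH -map_comp.
Qed.

Lemma allpairs_map (S T S' T' U : Type) (g : S' -> T' -> U) (f1 : S -> S') (f2 : T -> T') s t :
  [seq g x y | x <- map f1 s, y <- map f2 t] = [seq g (f1 x) (f2 y) | x <- s, y <- t].
Proof.
elim: s => [|x s IH] //=; by rewrite IH -map_comp.
Qed.

Lemma trk_nil k phi : 0 < k -> trk k phi <> [::].
Proof.
move=> hk; elim: phi => [m|a IHa b IHb|a IHa b IHb|a IHa b IHb|a IHa||] //=.
- by case: k hk.
- by case: (trk k a) IHa.
- case: (trk k a) IHa => // x s _; case: (trk k b) IHb => // y t _ /=.
- by case: (trk k b) IHb.
Qed.

Lemma trk_nz k phi : 0 < k -> forall psi, In psi (trk k phi) -> psi <> Zero.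
Proof.
move=> hk; elim: phi => [m|a IHa b IHb|a IHa b IHb|a IHa b IHb|a IHa||] /= psi.
- by move/In_map => [j [_ ->]].
- by case/In_cat; [apply: IHa | apply: IHb].
- by move/In_allpairs => [x [y [_ _ ->]]].
- move/In_map => [c [hc ->]]; case: (trk k a) (@trk_nil k a hk) => // x s _ /=.
- case=> [<-|[]]; case: (trk k a) (@trk_nil k a hk) => // x s _ /=.
- by case=> [<-|[<-|[]]].
- by case=> [<-|[]].
Qed.

Section Mirror.
Variables (B : lalg).

Lemma beval_foldr (e : nat -> B) chi l : chi <> Zero ->
  beval e (foldr Imp chi l) = chain (map (beval e) l) (beval e chi).
Proof.
move=> hchi; elim: l => [|x l IH] //=.
rewrite -IH; case: l {IH} => [|y l] //=; by case: chi hchi.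
Qed.

Lemma beval_negfoldr (e : nat -> B) b0 l : l <> [::] ->
  beval e (foldr Imp Zero l) = negch b0 (map (beval e) l).
Proof.
elim: l => [|x l IH] // _; case: l IH => [|y l] IH //=.
by congr (aimp _ _); exact: IH.
Qed.

Lemma mirror k (e : nat -> B) phi : 0 < k ->
  map (beval e) (trk k phi) =
  mem (fun m => [seq e (copy m j) | j <- iota 1 k]) (e (copy 0 1)) phi.
Proof.
move=> hk; elim: phi => [m|a IHa b IHb|a IHa b IHb|a IHa b IHb|a IHa||] //=.
- by rewrite -map_comp.
- by rewrite map_cat IHa IHb.
- by rewrite map_allpairs -IHa -IHb allpairs_map.
- rewrite -IHa -IHb -!map_comp; apply: map_ext_In => chi hchi /=.
  exact: beval_foldr (trk_nz hk hchi).
- by rewrite -IHa (beval_negfoldr _ (e (copy 0 1)) (@trk_nil k a hk)).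
Qed.

Lemma expr_imp x y : y <> Zero -> expr B (Imp x y) <-> expr B x /\ expr B y.
Proof. by case: y. Qed.

Lemma expr_foldr chi l : chi <> Zero -> expr B chi -> (forall x, In x l -> expr B x) ->
  expr B (foldr Imp chi l).
Proof.
move=> hz hc; elim: l => [|x l IH] //= hl.
have hz' : foldr Imp chi l <> Zero by case: l {IH hl}.
apply/(expr_imp _ hz'); split; [apply: hl; left | apply: IH => y hy; apply: hl; right] => //.
Qed.

Lemma expr_negfoldr l : isSome (aneg B) -> l <> [::] -> (forall x, In x l -> expr B x) ->
  expr B (foldr Imp Zero l).
Proof.
move=> hn; elim: l => [|x l IH] //= _ hl.
case: l IH hl => [|y l] IH hl /=.
- by split; [apply: hl; left | rewrite hn].
- have hz : foldr Imp Zero (y :: l) <> Zero by [].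
  split; first by apply: hl; left.
  by apply: IH => // z hz'; apply: hl; right.
Qed.

Lemma expr_trk L k phi : has_sig L B -> in_lang L phi -> 0 < k ->
  forall psi, In psi (trk k phi) -> expr B psi.
Proof.
case=> sA sO sN sZ sU hin hk.
elim: phi hin => [m|a IHa b IHb|a IHa b IHb|a IHa b IHb|a IHa||] /= hin psi.
- by move/In_map => [j [_ ->]].
- move/andP: hin => [/andP [_ ia] ib]; case/In_cat; [exact: IHa | exact: IHb].
- move/andP: hin => [/andP [ho ia] ib]; rewrite -sO in ho.
  move/In_allpairs => [x [y [hx hy ->]]] /=; split => //; split; [exact: IHa | exact: IHb].
- move/andP: hin => [ia ib] /In_map [c [hc ->]].
  apply: (expr_foldr (trk_nz hk hc)); [exact: IHb | exact: IHa].
- move/andP: hin => [hn ia] [<-|[]]; rewrite -sN in hn.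
  apply: expr_negfoldr => //; [exact: (@trk_nil k a hk) | exact: IHa].
- rewrite -sZ in hin; case=> [<-|[<-|[]]] //=; by rewrite hin orbT.
- by case=> [<-|[]].
Qed.

Lemma expr_Aform L (Q : quasi) k : has_sig L B -> all (in_lang L) (q_phis Q) -> 0 < k ->
  expr B (A_form Q k).
Proof.
move=> hs hall hk; rewrite /A_form; apply: expr_foldr => // x /In_map [phi [hphi ->]].
apply: expr_foldr => //; apply: (expr_trk hs _ hk).
elim: (q_phis Q) hall hphi => [|p ps IH] //= /andP [hp hps] [<-|h] //; exact: IH.
Qed.

Lemma beval_Aform (Q : quasi) k (e : nat -> B) :
  beval e (A_form Q k) =
  chain [seq chain (map (beval e) (trk k phi)) (e 0) | phi <- q_phis Q] (e 0).
Proof.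
rewrite /A_form beval_foldr // -map_comp; congr chain.
apply: map_ext_In => phi _ /=; exact: beval_foldr.
Qed.
End Mirror.


Section Kripke.
Variables (X : Type) (le : X -> X -> Prop).
Notation ue := (upeval le).

Lemma upeval_mono phi :
  (positive phi -> forall v1 v2 : nat -> X -> Prop, (forall m x, v1 m x -> v2 m x) ->
      forall x, ue v1 phi x -> ue v2 phi x) /\
  (negative phi -> forall v1 v2 : nat -> X -> Prop, (forall m x, v1 m x -> v2 m x) ->
      forall x, ue v2 phi x -> ue v1 phi x).
Proof.
elim: phi => [m|a [IHa1 IHa2] b [IHb1 IHb2]|a [IHa1 IHa2] b [IHb1 IHb2]
             |a [IHa1 IHa2] b [IHb1 IHb2]|a [IHa1 IHa2]||] /=; split => //.
- move=> _ v1 v2 h x; exact: h.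
- move=> /andP [pa pb] v1 v2 h x [h1 h2]; split; [exact: IHa1 h1 | exact: IHb1 h2].
- move=> /andP [pa pb] v1 v2 h x [h1 h2]; split; [exact: IHa2 h1 | exact: IHb2 h2].
- move=> /andP [pa pb] v1 v2 h x [h1|h2]; [left; exact: IHa1 h1 | right; exact: IHb1 h2].
- move=> /andP [pa pb] v1 v2 h x [h1|h2]; [left; exact: IHa2 h1 | right; exact: IHb2 h2].
- move=> /andP [na pb] v1 v2 h x hx y hxy hy; apply: (IHb1 pb _ _ h).
  apply: hx hxy _; exact: IHa2 na _ _ h _ hy.
- move=> /andP [pa nb] v1 v2 h x hx y hxy hy; apply: (IHb2 nb _ _ h).
  apply: hx hxy _; exact: IHa1 pa _ _ h _ hy.
- move=> na v1 v2 h x hx y hxy hy; apply: (hx y hxy); exact: IHa2 na _ _ h _ hy.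
- move=> pa v1 v2 h x hx y hxy hy; apply: (hx y hxy); exact: IHa1 pa _ _ h _ hy.
Qed.

Lemma upeval_pos phi v1 v2 : positive phi -> (forall m x, v1 m x -> v2 m x) ->
  forall x, ue v1 phi x -> ue v2 phi x.
Proof. by move=> p; have [h _] := upeval_mono phi; apply: h. Qed.
Lemma upeval_neg phi v1 v2 : negative phi -> (forall m x, v1 m x -> v2 m x) ->
  forall x, ue v2 phi x -> ue v1 phi x.
Proof. by move=> p; have [_ h] := upeval_mono phi; apply: h. Qed.

Lemma upeval_agree phi (v1 v2 : nat -> X -> Prop) :
  (forall m, occurs m phi -> forall x, v1 m x <-> v2 m x) ->
  forall x, ue v1 phi x <-> ue v2 phi x.
Proof.
elim: phi => [m|a IHa b IHb|a IHa b IHb|a IHa b IHb|a IHa||] /= h x.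
- by apply: h; rewrite eqxx.
- have ha := IHa (fun m hm => h m (introT orP (or_introl hm))).
  have hb := IHb (fun m hm => h m (introT orP (or_intror hm))).
  by rewrite ha hb.
- have ha := IHa (fun m hm => h m (introT orP (or_introl hm))).
  have hb := IHb (fun m hm => h m (introT orP (or_intror hm))).
  by rewrite ha hb.
- have ha := IHa (fun m hm => h m (introT orP (or_introl hm))).
  have hb := IHb (fun m hm => h m (introT orP (or_intror hm))).
  split => hx y hxy; [rewrite -ha -hb | rewrite ha hb]; exact: hx.
- have ha := IHa h; split => hx y hxy; [rewrite -ha | rewrite ha]; exact: hx.
- by [].
- by [].
Qed.

Lemma upeval_ext phi (v1 v2 : nat -> X -> Prop) :
  (forall m x, v1 m x <-> v2 m x) -> forall x, ue v1 phi x <-> ue v2 phi x.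
Proof. move=> h; apply: upeval_agree => m _; exact: h. Qed.

Lemma ante_req a : sahl_ante a -> forall (v : nat -> X -> Prop) x, ue v a x ->
  exists R : seq nat, (forall m, In m R -> v m x) /\
   forall v'' : nat -> X -> Prop, (forall m y, v'' m y -> v m y) ->
     (forall m, In m R -> v'' m x) -> ue v'' a x.
Proof.
have negcase : forall a, negative a -> forall (v : nat -> X -> Prop) x, ue v a x ->
  exists R : seq nat, (forall m, In m R -> v m x) /\
   forall v'' : nat -> X -> Prop, (forall m y, v'' m y -> v m y) ->
     (forall m, In m R -> v'' m x) -> ue v'' a x.
  move=> a0 na v x hx; exists [::]; split => // v'' h _; exact: upeval_neg na h _ hx.
elim: a => [m|a IHa b IHb|a IHa b IHb|a IHa b IHb|a IHa||] /orP [hn|hm];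
  try (by exact: negcase hn); move=> v x /=; rewrite /= in hm.
- move=> hx; exists [:: m]; split; first by move=> m' [<-|[]].
  move=> v'' _ h; apply: h; by left.
- move/andP: hm => [ha hb] [h1 h2].
  have [R1 [r1 f1]] := IHa ha v x h1; have [R2 [r2 f2]] := IHb hb v x h2.
  exists (R1 ++ R2); split.
  + by move=> m /In_cat [] ?; [apply: r1|apply: r2].
  + move=> v'' hle hR; split; [apply: f1 | apply: f2] => // m hm; apply: hR;
      apply/In_cat; [left|right] => //.
- move/andP: hm => [ha hb] [h1|h2].
  + have [R1 [r1 f1]] := IHa ha v x h1; exists R1; split => // v'' hle hR; left; exact: f1.
  + have [R2 [r2 f2]] := IHb hb v x h2; exists R2; split => // v'' hle hR; right; exact: f2.
- by move: hm.
- by move: hm.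
- by case.
- move=> _; exists [::]; split => //.
Qed.

Lemma body_req phi : sahl_body phi -> forall (v : nat -> X -> Prop) x, ~ ue v phi x ->
  exists R : seq (nat * X), (forall p, In p R -> v p.1 p.2) /\
   forall v'' : nat -> X -> Prop, (forall m y, v'' m y -> v m y) ->
     (forall p, In p R -> v'' p.1 p.2) -> ~ ue v'' phi x.
Proof.
have impcase : forall phi, sahl_imp phi -> forall (v : nat -> X -> Prop) x, ~ ue v phi x ->
  exists R : seq (nat * X), (forall p, In p R -> v p.1 p.2) /\
   forall v'' : nat -> X -> Prop, (forall m y, v'' m y -> v m y) ->
     (forall p, In p R -> v'' p.1 p.2) -> ~ ue v'' phi x.
  move=> phi0 /orP [hp|hm] v x hx.
    exists [::]; split => // v'' h _ hx''; apply: hx; exact: upeval_pos hp h _ hx''.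
  case: phi0 hm hx => [m|a b|a b|a b /andP [ha pb]|a ha||] //= hx.
  - have [y [hxy hy]] : exists y, le x y /\ ue v a y /\ ~ ue v b y.
      apply: NNPP => hno; apply: hx => y hxy hay; apply: NNPP => hby.
      by apply: hno; exists y.
    case: hy => hay hby.
    have [R [r f]] := ante_req ha hay.
    exists [seq (m, y) | m <- R]; split.
    + by move=> p /In_map [m [hm ->]]; apply: r.
    + move=> v'' hle hR hx''; apply: hby; apply: (upeval_pos pb hle).
      apply: hx'' hxy _; apply: f => // m hm; apply: (hR (m, y)); apply/In_map; by exists m.
  - have [y [hxy hay]] : exists y, le x y /\ ue v a y.
      apply: NNPP => hno; apply: hx => y hxy hay; by apply: hno; exists y.
    have [R [r f]] := ante_req ha hay.
    exists [seq (m, y) | m <- R]; split.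
    + by move=> p /In_map [m [hm ->]]; apply: r.
    + move=> v'' hle hR hx''; apply: (hx'' y hxy); apply: f => // m hm.
      apply: (hR (m, y)); apply/In_map; by exists m.
elim: phi => [m|a IHa b IHb|a IHa b IHb|a IHa b IHb|a IHa||] /orP [hi|hm];
  try (by exact: impcase hi); move=> v x /=; rewrite /= in hm; try by move: hm.
- move/andP: hm => [ha hb] hx.
  have [hna|hnb] : ~ ue v a x \/ ~ ue v b x.
    by apply: NNPP => hno; apply: hx; split; apply: NNPP => h; apply: hno; [left|right].
  + have [R [r f]] := IHa ha v x hna; exists R; split => // v'' hle hR [h1 _].
    exact: f hle hR h1.
  + have [R [r f]] := IHb hb v x hnb; exists R; split => // v'' hle hR [_ h2].
    exact: f hle hR h2.
- move/andP: hm => [ha hb] hx.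
  have hna : ~ ue v a x by move=> h; apply: hx; left.
  have hnb : ~ ue v b x by move=> h; apply: hx; right.
  have [R1 [r1 f1]] := IHa ha v x hna; have [R2 [r2 f2]] := IHb hb v x hnb.
  exists (R1 ++ R2); split.
  + by move=> p /In_cat [] ?; [apply: r1|apply: r2].
  + move=> v'' hle hR [h1|h2].
    * apply: (f1 v'' hle _ h1) => p hp; apply: hR; apply/In_cat; by left.
    * apply: (f2 v'' hle _ h2) => p hp; apply: hR; apply/In_cat; by right.
Qed.
End Kripke.


Section Esakia.
Variables (L : lang) (B : lalg) (hL : hlaws B) (hsig : has_sig L B).
Variables (D : nat -> B -> Prop) (b0 : B).
Notation X := (filt_star B).
Notation le := (@filt_le B).
Notation ue := (upeval le).

Definition vD : nat -> X -> Prop := fun m H => forall d, D m d -> pt H d.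
Definition subD (l : nat -> seq B) := forall m t, In t (l m) -> D m t.
Definition lsub (l1 l2 : nat -> seq B) := forall m t, In t (l1 m) -> In t (l2 m).
Definition lU (l1 l2 : nat -> seq B) : nat -> seq B := fun m => l1 m ++ l2 m.
Definition l0 : nat -> seq B := fun _ => [::].

Lemma subD_l0 : subD l0. Proof. by []. Qed.
Lemma subD_U l1 l2 : subD l1 -> subD l2 -> subD (lU l1 l2).
Proof. by move=> h1 h2 m t /In_cat [] h; [apply: h1|apply: h2]. Qed.
Lemma lsub_Ul l1 l2 : lsub l1 (lU l1 l2).
Proof. by move=> m t h; apply/In_cat; left. Qed.
Lemma lsub_Ur l1 l2 : lsub l2 (lU l1 l2).
Proof. by move=> m t h; apply/In_cat; right. Qed.
Lemma lsub_refl l : lsub l l. Proof. by []. Qed.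
Arguments lsub_Ul : clear implicits.
Arguments lsub_Ur : clear implicits.
Arguments lsub_refl : clear implicits.
Lemma lsub_trans l1 l2 l3 : lsub l1 l2 -> lsub l2 l3 -> lsub l1 l3.
Proof. by move=> h1 h2 m t h; apply: h2; apply: h1. Qed.
Lemma lsub_U l1 l2 l3 : lsub l1 l3 -> lsub l2 l3 -> lsub (lU l1 l2) l3.
Proof. by move=> h1 h2 m t /In_cat [] h; [apply: h1|apply: h2]. Qed.

Lemma wl_anti l1 l2 : lsub l1 l2 -> forall m H, wl l2 m H -> wl l1 m H.
Proof. by move=> h m H h2 t ht; apply: h2; apply: h. Qed.
Lemma vD_wl l : subD l -> forall m H, vD m H -> wl l m H.
Proof. by move=> h m H hv t ht; apply: hv; apply: h. Qed.

Lemma pos_anti a l1 l2 : positive a -> lsub l1 l2 -> forall H, ue (wl l2) a H -> ue (wl l1) a H.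
Proof. move=> p h; apply: upeval_pos p _; exact: wl_anti. Qed.
Lemma neg_mono a l1 l2 : negative a -> lsub l1 l2 -> forall H, ue (wl l1) a H -> ue (wl l2) a H.
Proof. move=> p h; apply: upeval_neg p _; exact: wl_anti. Qed.
Lemma pos_vD a l : positive a -> subD l -> forall H, ue vD a H -> ue (wl l) a H.
Proof. move=> p h; apply: upeval_pos p _; exact: vD_wl. Qed.
Lemma neg_vD a l : negative a -> subD l -> forall H, ue (wl l) a H -> ue vD a H.
Proof. move=> p h; apply: upeval_neg p _; exact: vD_wl. Qed.

Section Ea.
Variables (a : fm) (ia : in_lang L a) (pa : positive a) (G : X).

Definition Ea : B -> Prop :=
  fun x => exists l, subD l /\ pt G (chain (mem l b0 a) x).

Lemma Ea_use l l' x : subD l' -> lsub l l' -> pt G (chain (mem l b0 a) x) ->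
  forall G' : X, le G G' -> (forall t, In t (mem l' b0 a) -> pt G' t) -> pt G' x.
Proof.
move=> hl' hll' hx G' hGG' hm.
have h1 : ue (wl l') a G' by apply/(truth hL hsig l' b0 ia).
have h2 : ue (wl l) a G' by exact: (pos_anti pa hll' h1).
have h3 := proj1 (truth hL hsig l b0 ia G') h2.
exact: (chain_in hL hGG' hx h3).
Qed.

Lemma Ea_filter : impl_filter Ea.
Proof.
split.
- move=> x; exists l0; split => //; apply: (Kl_sub hL _ (ptF G)).
  case: (ptF G) => h1 _; exact: h1.
- move=> x y [l1 [s1 h1]] [l2 [s2 h2]].
  exists (lU l1 l2); split; first exact: subD_U.
  apply: NNPP => hn; have [G' [hGG' hm ny]] := chain_sep hL hn.
  apply: ny; have [_ hmp] := ptF G'; apply: (hmp x).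
  + exact: (Ea_use (subD_U s1 s2) (lsub_Ul l1 l2) h1 hGG' hm).
  + exact: (Ea_use (subD_U s1 s2) (lsub_Ur l1 l2) h2 hGG' hm).
Qed.

Lemma Ea_G x : pt G x -> Ea x.
Proof. by move=> hx; exists l0; split => //; apply: (Kl_sub hL _ (ptF G) hx). Qed.

Lemma Ea_mem l t : subD l -> In t (mem l b0 a) -> Ea t.
Proof. by move=> hl ht; exists l; split => //; apply: (Kl_in hL (ptF G) ht). Qed.

Lemma Ea_fin (n : seq B) : (forall t, In t n -> Ea t) ->
  exists l, subD l /\ forall l', subD l' -> lsub l l' -> forall G' : X, le G G' ->
     (forall t, In t (mem l' b0 a) -> pt G' t) -> forall t, In t n -> pt G' t.
Proof.
elim: n => [|x n IH] hn; first by exists l0; split.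
have [l1 [s1 h1]] := IH (fun t ht => hn t (or_intror ht)).
have [l2 [s2 h2]] := hn x (or_introl erefl).
exists (lU l1 l2); split; first exact: subD_U.
move=> l' hl' hsub G' hGG' hm t [<-|ht].
- apply: (Ea_use hl' _ h2 hGG' hm); exact: (lsub_trans (lsub_Ur _ _) hsub).
- apply: (h1 l' hl' _ G' hGG' hm t ht); exact: (lsub_trans (lsub_Ul _ _) hsub).
Qed.

Lemma Ea_point (IHpos : forall H : X, ~ ue vD a H -> exists l, subD l /\ ~ ue (wl l) a H)
  (M : X) : (forall x, Ea x -> pt M x) -> le G M /\ ue vD a M.
Proof.
move=> hM; split; first by move=> x hx; apply: hM; exact: Ea_G.
apply: NNPP => hn; have [l [hl hnl]] := IHpos M hn; apply: hnl.
apply/(truth hL hsig l b0 ia) => t ht; apply: hM; exact: (Ea_mem hl ht).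
Qed.
End Ea.

Lemma esakia phi : in_lang L phi ->
  (positive phi -> forall G : X, ~ ue vD phi G -> exists l, subD l /\ ~ ue (wl l) phi G) /\
  (negative phi -> forall G : X, ue vD phi G -> exists l, subD l /\ ue (wl l) phi G).
Proof.
case: (hsig) => sA sO sN sZ sU.
elim: phi => [m|a IHa b IHb|a IHa b IHb|a IHa b IHb|a IHa||] /= hin; split => //.
-
  move=> _ G hn.
  have [d [hd nd]] : exists d, D m d /\ ~ pt G d.
    apply: NNPP => hno; apply: hn => d hd; apply: NNPP => nd; apply: hno; by exists d.
  exists (fun n => if n == m then [:: d] else [::]); split.
  + by move=> n t; case: eqP => [->|_] // [<-|[]].
  + by move=> h; apply: nd; apply: h; rewrite eqxx; left.
- move/andP: hin => [/andP [_ ia] ib] /andP [pa pb] G hn.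
  have [[IHa1 _] [IHb1 _]] := (IHa ia, IHb ib).
  have [hna|hnb] : ~ ue vD a G \/ ~ ue vD b G.
    by apply: NNPP => hno; apply: hn; split; apply: NNPP => h; apply: hno; [left|right].
  + have [l [hl hnl]] := IHa1 pa G hna; exists l; split => // [[]] //.
  + have [l [hl hnl]] := IHb1 pb G hnb; exists l; split => // [[]] //.
- move/andP: hin => [/andP [_ ia] ib] /andP [na nb] G [h1 h2].
  have [[_ IHa2] [_ IHb2]] := (IHa ia, IHb ib).
  have [l1 [s1 f1]] := IHa2 na G h1; have [l2 [s2 f2]] := IHb2 nb G h2.
  exists (lU l1 l2); split; first exact: subD_U.
  split; [exact: (neg_mono na (lsub_Ul _ _) f1) | exact: (neg_mono nb (lsub_Ur _ _) f2)].
- move/andP: hin => [/andP [_ ia] ib] /andP [pa pb] G hn.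
  have [[IHa1 _] [IHb1 _]] := (IHa ia, IHb ib).
  have hna : ~ ue vD a G by move=> h; apply: hn; left.
  have hnb : ~ ue vD b G by move=> h; apply: hn; right.
  have [l1 [s1 f1]] := IHa1 pa G hna; have [l2 [s2 f2]] := IHb1 pb G hnb.
  exists (lU l1 l2); split; first exact: subD_U.
  case=> h; [apply: f1; exact: (pos_anti pa (lsub_Ul _ _) h)
            | apply: f2; exact: (pos_anti pb (lsub_Ur _ _) h)].
- move/andP: hin => [/andP [_ ia] ib] /andP [na nb] G [h1|h2].
  have [[_ IHa2] [_ IHb2]] := (IHa ia, IHb ib).
  + have [l [hl f]] := IHa2 na G h1; exists l; split => //; by left.
  + have [[_ IHb2] _] := (IHb ib, tt).
    have [l [hl f]] := IHb2 nb G h2; exists l; split => //; by right.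
-
  move/andP: hin => [ia ib] /andP [na pb] G hn.
  have [[_ IHa2] [IHb1 _]] := (IHa ia, IHb ib).
  have [G' [hGG' [ha hb]]] : exists G', le G G' /\ ue vD a G' /\ ~ ue vD b G'.
    apply: NNPP => hno; apply: hn => G' hGG' ha; apply: NNPP => hb; apply: hno.
    by exists G'.
  have [l1 [s1 f1]] := IHa2 na G' ha; have [l2 [s2 f2]] := IHb1 pb G' hb.
  exists (lU l1 l2); split; first exact: subD_U.
  move=> h; apply: f2; apply: (pos_anti pb (lsub_Ur l1 l2)); apply: h hGG' _.
  exact: (neg_mono na (lsub_Ul _ _) f1).
- (* Imp negative: a positive, b negative: compactness *)
  move/andP: hin => [ia ib] /andP [pa nb] G hup.
  have [[IHa1 _] [_ IHb2]] := (IHa ia, IHb ib).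
  apply: NNPP => hno.
  have Hno : forall l, subD l -> exists G', [/\ le G G', ue (wl l) a G' & ~ ue (wl l) b G'].
    move=> l hl; apply: NNPP => h; apply: hno; exists l; split => // G' hGG' ha.
    apply: NNPP => hb; apply: h; by exists G'.
  pose N := fun n : seq B => exists l, subD l /\ n = mem l b0 b.
  have [|||M [hM hEM hNM]] := zorn_ext (Ea_filter ia pa G) (N := N).
  + move=> n [l [hl ->]] hsub.
    have [l1 [s1 f1]] := Ea_fin ia pa hsub.
    have [G' [hGG' ha hb]] := Hno (lU l l1) (subD_U hl s1).
    apply: hb; apply: (neg_mono nb (lsub_Ul l l1)).
    apply/(truth hL hsig l b0 ib) => t ht.
    apply: (f1 (lU l l1) (subD_U hl s1) (lsub_Ur _ _) G' hGG' _ t ht).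
    exact/(truth hL hsig _ b0 ia).
  + move=> n1 n2 [l1 [s1 ->]] [l2 [s2 ->]].
    exists (mem (lU l1 l2) b0 b); split; first by exists (lU l1 l2); split => //; exact: subD_U.
    move=> F hF hor t ht; apply: NNPP => nt.
    have [M [hM hFM nMt]] := separation hF nt.
    pose MM : X := exist _ M hM.
    have nb' : ~ ue (wl (lU l1 l2)) b MM.
      by move/(truth hL hsig _ b0 ib) => /(_ t ht).
    case: hor => hn.
    * apply: nb'; apply: (neg_mono nb (lsub_Ul l1 l2)).
      apply/(truth hL hsig _ b0 ib) => x hx; apply: hFM; exact: hn.
    * apply: nb'; apply: (neg_mono nb (lsub_Ur l1 l2)).
      apply/(truth hL hsig _ b0 ib) => x hx; apply: hFM; exact: hn.
  + by exists (mem l0 b0 b); rewrite /N; exists l0; split => //; exact: subD_l0.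
  + pose MM : X := exist _ M hM.
    have [hGM haM] := Ea_point ia (IHa1 pa) (M := MM) hEM.
    have hbM := hup MM hGM haM.
    have [l [hl hbl]] := IHb2 nb MM hbM.
    apply: (hNM (mem l b0 b)); first by exists l.
    exact: (proj1 (truth hL hsig l b0 ib MM) hbl).
-
  move/andP: hin => [_ ia] na G hn.
  have [_ IHa2] := IHa ia.
  have [G' [hGG' ha]] : exists G', le G G' /\ ue vD a G'.
    apply: NNPP => hno; apply: hn => G' hGG' ha; apply: hno; by exists G'.
  have [l [hl f]] := IHa2 na G' ha.
  by exists l; split => // h; apply: (h G' hGG' f).
-
  move/andP: hin => [hn ia] pa G hup; rewrite -sN in hn.
  have hs : isSome (aneg B) || isSome (azero B) by rewrite hn.
  have [IHa1 _] := IHa ia.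
  apply: NNPP => hno.
  have Hno : forall l, subD l -> exists G', le G G' /\ ue (wl l) a G'.
    move=> l hl; apply: NNPP => h; apply: hno; exists l; split => // G' hGG' ha.
    apply: h; by exists G'.
  pose N := fun n : seq B => n = [:: b0; bneg b0].
  have [|||M [hM hEM hNM]] := zorn_ext (Ea_filter ia pa G) (N := N).
  + move=> n -> hsub.
    have [l1 [s1 f1]] := Ea_fin ia pa hsub.
    have [G' [hGG' ha]] := Hno l1 s1.
    have hm := proj1 (truth hL hsig l1 b0 ia G') ha.
    have h1 := f1 l1 s1 (lsub_refl _) G' hGG' hm.
    exact: (pt_improper hL hs (h1 b0 (or_introl erefl)) (h1 _ (or_intror (or_introl erefl)))).
  + move=> n1 n2 -> ->; exists [:: b0; bneg b0]; split => // F _ [] //.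
  + by exists [:: b0; bneg b0].
  + pose MM : X := exist _ M hM.
    have [hGM haM] := Ea_point ia (IHa1 pa) (M := MM) hEM.
    exact: (hup MM hGM haM).
- move=> _ G _; exists l0; split; [exact: subD_l0 | by []].
- move=> _ G _; exists l0; split; [exact: subD_l0 | by []].
Qed.

End Esakia.


Section Esakia2.
Variables (L : lang) (B : lalg) (hL : hlaws B) (hsig : has_sig L B).
Variables (D : nat -> B -> Prop) (b0 : B).
Notation X := (filt_star B).
Notation le := (@filt_le B).
Notation ue := (upeval le).
Notation vD := (vD D).
Notation subD := (subD D).

Lemma ante_esakia a : in_lang L a -> sahl_ante a -> forall G : X, ue vD a G ->
  exists l0, subD l0 /\ forall l, subD l -> lsub l0 l -> ue (wl l) a G.
Proof.
have negcase : forall a, in_lang L a -> negative a -> forall G : X, ue vD a G ->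
  exists l0, subD l0 /\ forall l, subD l -> lsub l0 l -> ue (wl l) a G.
  move=> a0 ia na G hG.
  have [l [hl f]] := (proj2 (esakia hL hsig D b0 ia)) na G hG.
  exists l; split => // l' hl' hsub; exact: (neg_mono na hsub f).
elim: a => [m|a IHa b IHb|a IHa b IHb|a IHa b IHb|a IHa||] ia /orP [na|hm] G hG;
  try (by exact: negcase ia na G hG); rewrite /= in hm ia hG; try by move: hm.
- exists (l0 B); split; first exact: subD_l0.
  move=> l hl _; exact: (vD_wl hl hG).
- move/andP: ia => [/andP [_ ia] ib]; move/andP: hm => [ha hb]; case: hG => h1 h2.
  have [l1 [s1 f1]] := IHa ia ha G h1; have [l2 [s2 f2]] := IHb ib hb G h2.
  exists (lU l1 l2); split; first exact: subD_U.
  move=> l hl hsub; split.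
  + apply: f1 => //; exact: (lsub_trans (@lsub_Ul _ _ _) hsub).
  + apply: f2 => //; exact: (lsub_trans (@lsub_Ur _ _ _) hsub).
- move/andP: ia => [/andP [_ ia] ib]; move/andP: hm => [ha hb].
  case: hG => [h1|h2].
  + have [l1 [s1 f1]] := IHa ia ha G h1.
    exists l1; split => // l hl hsub; left; exact: f1.
  + have [l1 [s1 f1]] := IHb ib hb G h2.
    exists l1; split => // l hl hsub; right; exact: f1.
- exists (l0 B); split => //; exact: subD_l0.
Qed.

Lemma body_esakia phi : in_lang L phi -> sahl_body phi -> forall F : X, ~ ue vD phi F ->
  exists l0, subD l0 /\ forall l, subD l -> lsub l0 l -> ~ ue (wl l) phi F.
Proof.
have impcase : forall phi, in_lang L phi -> sahl_imp phi -> forall F : X, ~ ue vD phi F ->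
  exists l0, subD l0 /\ forall l, subD l -> lsub l0 l -> ~ ue (wl l) phi F.
  move=> phi0 ip /orP [pp|hm] F hF.
    have [l [hl f]] := (proj1 (esakia hL hsig D b0 ip)) pp F hF.
    exists l; split => // l' hl' hsub h; apply: f; exact: (pos_anti pp hsub h).
  case: phi0 ip hm hF => [m|a b|a b|a b|a|| ] //= ip.
  - move/andP: ip => [ia ib] /andP [ha pb] hF.
    have [G [hFG [haG hbG]]] : exists G, le F G /\ ue vD a G /\ ~ ue vD b G.
      apply: NNPP => hno; apply: hF => G hFG haG; apply: NNPP => hbG; apply: hno.
      by exists G.
    have [l1 [s1 f1]] := ante_esakia ia ha haG.
    have [l2 [s2 f2]] := (proj1 (esakia hL hsig D b0 ib)) pb G hbG.
    exists (lU l1 l2); split; first exact: subD_U.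
    move=> l hl hsub h; apply: f2; apply: (pos_anti pb (lsub_trans (@lsub_Ur _ _ _) hsub)).
    apply: h hFG _; apply: f1 => //; exact: (lsub_trans (@lsub_Ul _ _ _) hsub).
  - move/andP: ip => [_ ia] ha hF.
    have [G [hFG haG]] : exists G, le F G /\ ue vD a G.
      apply: NNPP => hno; apply: hF => G hFG haG; apply: hno; by exists G.
    have [l1 [s1 f1]] := ante_esakia ia ha haG.
    exists l1; split => // l hl hsub h; apply: (h G hFG); exact: f1.
elim: phi => [m|a IHa b IHb|a IHa b IHb|a IHa b IHb|a IHa||] ip /orP [hi|hm];
  try (by exact: impcase ip hi); move=> F; rewrite /= in hm ip |- *; try by move: hm.
- move/andP: hm => [ha hb]; move/andP: ip => [/andP [_ ia] ib] hF.
  have [hna|hnb] : ~ ue vD a F \/ ~ ue vD b F.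
    by apply: NNPP => hno; apply: hF; split; apply: NNPP => h; apply: hno; [left|right].
  + have [l [hl f]] := IHa ia ha F hna; exists l; split => // l' hl' hsub [h _].
    exact: f hl' hsub h.
  + have [l [hl f]] := IHb ib hb F hnb; exists l; split => // l' hl' hsub [_ h].
    exact: f hl' hsub h.
- move/andP: hm => [ha hb]; move/andP: ip => [/andP [_ ia] ib] hF.
  have hna : ~ ue vD a F by move=> h; apply: hF; left.
  have hnb : ~ ue vD b F by move=> h; apply: hF; right.
  have [l1 [s1 f1]] := IHa ia ha F hna; have [l2 [s2 f2]] := IHb ib hb F hnb.
  exists (lU l1 l2); split; first exact: subD_U.
  move=> l hl hsub [h|h].
  + exact: f1 hl (lsub_trans (@lsub_Ul _ _ _) hsub) h.
  + exact: f2 hl (lsub_trans (@lsub_Ur _ _ _) hsub) h.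
Qed.
End Esakia2.


Lemma all_In (T : Type) (p : T -> bool) (s : seq T) x : all p s -> In x s -> p x.
Proof. elim: s => [|y s IH] //= /andP [hy hs] [<-|h] //; exact: IH. Qed.

Lemma In_filter (T : Type) (p : T -> bool) (s : seq T) x :
  In x [seq y <- s | p y] <-> In x s /\ p x.
Proof.
elim: s => [|y s IH] /=; first by split => // [[]].
case hy: (p y) => /=; rewrite IH; split.
- by case=> [<-|[h1 h2]]; split => //; [left|right].
- by case=> [[<-|h1] h2]; [left|right].
- by case=> h1 h2; split => //; right.
- by case=> [[e|h1] h2] //; move: hy; rewrite e h2.
Qed.

Lemma In_nth_ms (T : Type) (d : T) (s : seq T) t :
  In t s -> exists i, i < size s /\ nth d s i = t.
Proof.
elim: s => [|x s IH] //= [<-|h]; first by exists 0.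
have [i [hi <-]] := IH h; by exists i.+1.
Qed.

Lemma nth_In_ms (T : Type) (d : T) (s : seq T) i : i < size s -> In (nth d s i) s.
Proof.
elim: s i => [|x s IH] [|i] //= hi; first by left.
right; exact: IH.
Qed.

Lemma sumn_ge (T : Type) (f : T -> nat) (s : seq T) x : In x s -> f x <= sumn (map f s).
Proof. elim: s => [|y s IH] //= [<-|h]; [exact: leq_addr | exact: leq_trans (IH h) (leq_addl _ _)]. Qed.

Lemma In_mem_eq (T : eqType) (x : T) (s : seq T) : x \in s -> In x s.
Proof. elim: s => [|y s IH] //=; rewrite in_cons => /orP [/eqP ->|h]; [by left | right; exact: IH]. Qed.

Lemma copy_pos m j : 0 < copy m j.
Proof. by rewrite /copy muln_gt0 expn_gt0 addn1. Qed.

Lemma logn_copy m j : logn 2 (copy m j) = m.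
Proof.
rewrite /copy lognM ?expn_gt0 ?addn1 // pfactorK // logn_coprime ?addn0 //.
by rewrite coprime2n /= mul2n odd_double.
Qed.

Lemma div_copy m j : (copy m j %/ 2 ^ logn 2 (copy m j)) %/ 2 = j.
Proof. rewrite logn_copy /copy mulKn ?expn_gt0 //; lia. Qed.

Fixpoint fbound (phi : fm) : nat :=
  match phi with
  | Var m => m.+1
  | And a b | Or a b | Imp a b => maxn (fbound a) (fbound b)
  | Neg a => fbound a
  | Zero | One => 0
  end.

Lemma fbound_occ phi m : occurs m phi -> m < fbound phi.
Proof.
elim: phi => [n|a IHa b IHb|a IHa b IHb|a IHa b IHb|a IHa||] //=;
  try (by move/eqP => ->);
  try (by case/orP => h; [exact: leq_trans (IHa h) (leq_maxl _ _)
                         | exact: leq_trans (IHb h) (leq_maxr _ _)]).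
Qed.

Lemma lbound_occ (ps : seq fm) phi m : In phi ps -> occurs m phi ->
  m < foldr maxn 0 (map fbound ps).
Proof.
elim: ps => [|p ps IH] //= [<-|h] ho.
- exact: leq_trans (fbound_occ ho) (leq_maxl _ _).
- exact: leq_trans (IH h ho) (leq_maxr _ _).
Qed.

Section Core.
Variables (L : lang) (B : lalg) (hL : hlaws B) (hsig : has_sig L B).
Notation X := (filt_star B).
Notation le := (@filt_le B).
Notation ue := (upeval le).

Lemma le_refl (H : X) : le H H. Proof. by []. Qed.

Lemma gather_R (v : nat -> X -> Prop) (F0 : X) (ps : seq fm) :
  (forall phi, In phi ps -> sahl_body phi) -> (forall phi, In phi ps -> ~ ue v phi F0) ->
  exists R : seq (nat * X), (forall p, In p R -> v p.1 p.2) /\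
   forall v'' : nat -> X -> Prop, (forall m y, v'' m y -> v m y) ->
     (forall p, In p R -> v'' p.1 p.2) -> forall phi, In phi ps -> ~ ue v'' phi F0.
Proof.
elim: ps => [|p ps IH] hb hn; first by exists [::].
have [R1 [r1 f1]] := body_req (hb p (or_introl erefl)) (hn p (or_introl erefl)).
have [R2 [r2 f2]] := IH (fun q h => hb q (or_intror h)) (fun q h => hn q (or_intror h)).
exists (R1 ++ R2); split.
- by move=> q /In_cat [] h; [apply: r1|apply: r2].
- move=> v'' hle hR phi [<-|h].
  + apply: f1 => // q hq; apply: hR; apply/In_cat; by left.
  + apply: f2 => // q hq; apply: hR; apply/In_cat; by right.
Qed.

Lemma gather_l (D : nat -> B -> Prop) (b0 : B) (F0 : X) (ps : seq fm) :
  (forall phi, In phi ps -> in_lang L phi) ->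
  (forall phi, In phi ps -> sahl_body phi) -> (forall phi, In phi ps -> ~ ue (vD D) phi F0) ->
  exists ls, subD D ls /\ forall l, subD D l -> lsub ls l ->
     forall phi, In phi ps -> ~ ue (wl l) phi F0.
Proof.
elim: ps => [|p ps IH] hi hb hn; first by exists (l0 B); split => //; exact: subD_l0.
have [l1 [s1 f1]] := body_esakia hL hsig b0 (hi p (or_introl erefl))
   (hb p (or_introl erefl)) (hn p (or_introl erefl)).
have [l2 [s2 f2]] := IH (fun q h => hi q (or_intror h)) (fun q h => hb q (or_intror h))
   (fun q h => hn q (or_intror h)).
exists (lU l1 l2); split; first exact: subD_U.
move=> l hl hsub phi [<-|h].
- apply: f1 => //; exact: (lsub_trans (@lsub_Ul _ _ _) hsub).
- apply: f2 => //; exact: (lsub_trans (@lsub_Ur _ _ _) hsub).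
Qed.

Lemma gather_t (F0 : X) (M : fm -> seq B) (ps : seq fm) :
  (forall phi, In phi ps -> exists t, In t (M phi) /\ ~ pt F0 t) ->
  exists ts, (forall t, In t ts -> ~ pt F0 t) /\
    forall phi, In phi ps -> exists t, In t ts /\ In t (M phi).
Proof.
elim: ps => [|p ps IH] h; first by exists [::].
have [t [ht nt]] := h p (or_introl erefl).
have [ts [h1 h2]] := IH (fun q hq => h q (or_intror hq)).
exists (t :: ts); split.
- by move=> s [<-|hs] //; apply: h1.
- move=> phi [<-|hphi]; first by exists t; split => //; left.
  have [s [hs1 hs2]] := h2 phi hphi; exists s; split => //; by right.
Qed.

Variable (Q : quasi) (hq : sahlqvist_quasi_in L Q).
Hypothesis hvalid : forall k, 0 < k -> forall (e : nat -> B) (b : B),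
  beval e (A_form Q k) = aimp b b.

Lemma core_b (v : nat -> X -> Prop) : (forall n, upset le (v n)) ->
  forall F0 : X, ~ (forall phi, In phi (q_phis Q) -> ~ ue v phi F0).
Proof.
move=> hv F0 hall.
case: hq => _ _ _ hbody hlang.
have hb : forall phi, In phi (q_phis Q) -> sahl_body phi by move=> phi; exact: all_In hbody.
have hi : forall phi, In phi (q_phis Q) -> in_lang L phi by move=> phi; exact: all_In hlang.
have [R [hR fR]] := gather_R hb hall.
pose v' : nat -> X -> Prop := fun m H => exists G, In (m, G) R /\ le G H.
have hv'v : forall m y, v' m y -> v m y.
  move=> m y [G [hG hGy]]; apply: (hv m G y hGy); exact: (hR (m, G) hG).
have hv'R : forall p, In p R -> v' p.1 p.2.
  by case=> m G hp; exists G; split.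
have hfail' := fR v' hv'v hv'R.
pose D : nat -> B -> Prop := fun m d => forall G : X, In (m, G) R -> pt G d.
have hDv' : forall m H, vD D m H <-> v' m H.
  move=> m H; split; last first.
    by move=> [G [hG hGH]] d hd; apply: hGH; apply: hd.
  move=> hD; apply: NNPP => hn.
  pose Gs := [seq pt p.2 | p <- [seq p <- R | p.1 == m]].
  have hGf : forall G, In G Gs -> impl_filter G.
    by move=> G /In_map [p [_ ->]]; exact: ptF.
  have hGn : forall G, In G Gs -> exists a, G a /\ ~ pt H a.
    move=> G /In_map [p [/In_filter [hp /eqP hpm] ->]].
    apply: NNPP => hno; apply: hn; exists p.2; split.
      by rewrite -hpm; case: p hp {hpm hno}.
    move=> x hx; apply: NNPP => nx; apply: hno; by exists x.
  have [d [hd nd]] := union_points hL (ptP H) hGf hGn.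
  apply: nd; apply: hD => G hG; apply: hd; apply/In_map; exists (m, G); split => //.
  by apply/In_filter; split => //=.
have hfailD : forall phi, In phi (q_phis Q) -> ~ ue (vD D) phi F0.
  move=> phi hphi h; apply: (hfail' phi hphi); exact: (proj1 (upeval_ext le phi hDv' F0) h).
have [b0 _] := pt_prop F0.
have [ls [hls fls]] := gather_l b0 hi hb hfailD.
have hfls := fls ls hls (@lsub_refl _ ls).
pose N := foldr maxn 0 (map fbound (q_phis Q)).
pose l' : nat -> seq B := fun m => if m < N then ls m else [::].
have hfl' : forall phi, In phi (q_phis Q) -> ~ ue (wl l') phi F0.
  move=> phi hphi h; apply: (hfls phi hphi).
  have hag : forall m, occurs m phi -> forall x, wl ls m x <-> wl l' m x.
    by move=> m hm x; rewrite /wl /l' (lbound_occ hphi hm).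
  exact: (proj2 (upeval_agree le hag F0) h).
pose k := (sumn [seq size (ls m) | m <- iota 0 N]).+1.
have hk : 0 < k by [].
have hsize : forall m, size (l' m) < k.
  move=> m; rewrite /l'; case: ifP => hm //.
  rewrite ltnS; apply: (sumn_ge (fun m => size (ls m))).
  by apply: In_mem_eq; rewrite mem_iota add0n.
pose one := aimp b0 b0.
pose e0 : nat -> B := fun n => nth one (l' (logn 2 n)) ((n %/ 2 ^ logn 2 n) %/ 2).-1.
have he0 : forall m j, e0 (copy m j) = nth one (l' m) j.-1.
  by move=> m j; rewrite /e0 div_copy logn_copy.
pose le' : nat -> seq B := fun m => [seq e0 (copy m j) | j <- iota 1 k].
have hwl : forall m (H : X), wl le' m H <-> wl l' m H.
  move=> m H; split => h t ht.
  - have [i [hii <-]] := In_nth_ms one ht.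
    apply: h; apply/In_map; exists i.+1; split; last by rewrite he0.
    apply: In_mem_eq; rewrite mem_iota add1n ltnS /=.
    exact: leq_trans hii (ltnW (hsize m)).
  - move/In_map: ht => [j [_ ->]]; rewrite he0.
    case: (ltnP j.-1 (size (l' m))) => hj.
    + apply: h; exact: nth_In_ms.
    + rewrite nth_default //; case: (ptF H) => h1 _; exact: h1.
have hfle : forall phi, In phi (q_phis Q) -> ~ ue (wl le') phi F0.
  move=> phi hphi h; apply: (hfl' phi hphi); exact: (proj1 (upeval_ext le phi hwl F0) h).
have hwit : forall phi, In phi (q_phis Q) ->
    exists t, In t (mem le' (e0 (copy 0 1)) phi) /\ ~ pt F0 t.
  move=> phi hphi; apply: NNPP => hno; apply: (hfle phi hphi).
  apply/(truth hL hsig le' (e0 (copy 0 1)) (hi phi hphi)) => t ht.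
  apply: NNPP => nt; apply: hno; by exists t.
have [ts [hts1 hts2]] := gather_t hwit.
have [c [nc hc]] := clemma hL (ptP F0) hts1.
pose e : nat -> B := fun n => if n == 0 then c else e0 n.
have hee : forall m j, e (copy m j) = e0 (copy m j).
  by move=> m j; rewrite /e; case: eqP => // h; move: (copy_pos m j); rewrite h.
have hmir : forall phi, map (beval e) (trk k phi) = mem le' (e0 (copy 0 1)) phi.
  move=> phi; rewrite (mirror _ _ hk) hee; congr mem.
  apply: functional_extensionality => m; apply: eq_map => j; exact: hee.
have hA := hvalid hk e c.
rewrite beval_Aform in hA.
have h1 : pt F0 (aimp c c) by case: (ptF F0) => h1 _; exact: h1.
rewrite -hA in h1.
apply: nc; apply: (Kl_mp hL (ptF F0) _ h1).
move=> x /In_map [phi [hphi ->]]; rewrite hmir /= /e /=.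
have [t [htts htm]] := hts2 phi hphi.
have hK := Kl_filter hL (mem le' (e0 (copy 0 1)) phi) (ptF F0).
case: (hK) => _ hmp; apply: (hmp t); first exact: (Kl_in hL (ptF F0) htm).
apply: (Kl_sub hL _ (ptF F0)); exact: hc.
Qed.
End Core.


Lemma dir_b (L : lang) (Q : quasi) (H : heyting) (S : H -> Prop) :
  sahlqvist_quasi_in L Q ->
  (forall theta, A_set Q theta -> sub_valid S theta) ->
  forall B : lalg, in_variety L S B -> sat_tr (@filt_le B) Q.
Proof.
move=> hq hA B hB.
have hL := variety_laws hB.
have hsig : has_sig L B by case: hB.
have hvalid : forall k, 0 < k -> forall (e : nat -> B) (b : B), beval e (A_form Q k) = aimp b b.
  move=> k hk.
  case: hB => _ [I [P [f [hP [hImp [_ [hOr [hNeg [hZero [_ hsurj]]]]]]]]]].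
  apply: (transfer hP hImp hOr hNeg hZero hsurj).
  - by case: hq => _ _ _ _ hl; exact: expr_Aform hsig hl hk.
  - move=> v hv; apply: (hA (A_form Q k)) => //; by exists k.
rewrite /sat_tr /Up_sat_quasi => v hv hyp x hy; apply: NNPP => hz.
apply: (core_b hL hsig hq hvalid hv (F0 := x)) => phi hphi hphix.
apply: hz; exact: hyp phi hphi x (conj hphix hy).
Qed.

Definition optb (b : bool) (T : Type) (f : b = true -> T) : option T :=
  (if b as bb return (b = bb -> option T) then fun e => Some (f e) else fun _ => None)
    (erefl b).

Lemma optb_some (b : bool) T (f : b = true -> T) : isSome (optb f) = b.
Proof. by rewrite /optb; case: b f. Qed.

Lemma optbE (b : bool) T (f : b = true -> T) g : optb f = Some g -> exists e, g = f e.
Proof. by rewrite /optb; case: b f => f //= [<-]; exists erefl. Qed.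

Lemma sig_eq (T : Type) (P : T -> Prop) (a b : {x | P x}) : proj1_sig a = proj1_sig b -> a = b.
Proof.
case: a => x px; case: b => y py /= exy; subst y.
by rewrite (proof_irrelevance _ px py).
Qed.

Section Alg.
Variables (L : lang) (H : heyting) (S : H -> Prop) (hS : subreduct L S).

Definition SA := {x : H | S x}.
Let hne := proj1 hS.
Let himpS := proj1 (proj2 hS).
Let handS := proj1 (proj2 (proj2 hS)).
Let horS := proj1 (proj2 (proj2 (proj2 hS))).
Let hnegS := proj1 (proj2 (proj2 (proj2 (proj2 hS)))).
Let hzeroS := proj1 (proj2 (proj2 (proj2 (proj2 (proj2 hS))))).
Let honeS := proj2 (proj2 (proj2 (proj2 (proj2 (proj2 hS))))).

Definition Aimp (a b : SA) : SA :=
  exist _ (himp (proj1_sig a) (proj1_sig b)) (himpS (proj2_sig a) (proj2_sig b)).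

Definition Alg : lalg := @LAlg SA Aimp
  (optb (fun e : has_and L = true => fun a b : SA =>
      exist _ (hmeet (proj1_sig a) (proj1_sig b)) (handS e (proj2_sig a) (proj2_sig b))))
  (optb (fun e : has_or L = true => fun a b : SA =>
      exist _ (hjoin (proj1_sig a) (proj1_sig b)) (horS e (proj2_sig a) (proj2_sig b))))
  (optb (fun e : has_neg L = true => fun a : SA =>
      exist _ (himp (proj1_sig a) (hbot H)) (hnegS e (proj2_sig a))))
  (optb (fun e : has_zero L = true => (exist _ (hbot H) (hzeroS e) : SA)))
  (optb (fun e : has_one L = true => (exist _ (htop H) (honeS e) : SA))).

Definition a0 : SA :=
  let w := constructive_indefinite_description _ hne in exist _ (proj1_sig w) (proj2_sig w).

Definition fA (x : unit -> H) : Alg :=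
  match excluded_middle_informative (S (x tt)) with
  | left p => exist _ (x tt) p
  | right _ => a0 end.

Lemma fA_val x : S (x tt) -> proj1_sig (fA x) = x tt.
Proof. by rewrite /fA; case: excluded_middle_informative. Qed.

Lemma fA_E x (y : Alg) : S (x tt) -> proj1_sig y = x tt -> fA x = y.
Proof. by move=> hx hy; apply: sig_eq; rewrite fA_val. Qed.

Lemma Alg_hP : forall x : unit -> H, S (x tt) -> forall i, S (x i).
Proof. by move=> x hx []. Qed.

Lemma Alg_hImp : forall x y : unit -> H, S (x tt) -> S (y tt) ->
  S (himp (x tt) (y tt)) /\ fA (fun i => himp (x i) (y i)) = aimp (fA x) (fA y).
Proof.
move=> x y hx hy; have hxy := himpS hx hy; split => //.
by apply: fA_E => //=; rewrite !fA_val.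
Qed.

Lemma Alg_hAnd : forall g, aand Alg = Some g -> forall x y : unit -> H, S (x tt) -> S (y tt) ->
  S (hmeet (x tt) (y tt)) /\ fA (fun i => hmeet (x i) (y i)) = g (fA x) (fA y).
Proof.
move=> g hg; have [e ge] := @optbE (has_and L) _ _ g hg; subst g => x y hx hy.
have hxy := handS e hx hy; split => //.
by apply: fA_E => //=; rewrite !fA_val.
Qed.

Lemma Alg_hOr : forall g, aor Alg = Some g -> forall x y : unit -> H, S (x tt) -> S (y tt) ->
  S (hjoin (x tt) (y tt)) /\ fA (fun i => hjoin (x i) (y i)) = g (fA x) (fA y).
Proof.
move=> g hg; have [e ge] := @optbE (has_or L) _ _ g hg; subst g => x y hx hy.
have hxy := horS e hx hy; split => //.
by apply: fA_E => //=; rewrite !fA_val.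
Qed.

Lemma Alg_hNeg : forall g, aneg Alg = Some g -> forall x : unit -> H, S (x tt) ->
  S (himp (x tt) (hbot H)) /\ fA (fun i => himp (x i) (hbot H)) = g (fA x).
Proof.
move=> g hg; have [e ge] := @optbE (has_neg L) _ _ g hg; subst g => x hx.
have hxy := hnegS e hx; split => //.
by apply: fA_E => //=; rewrite !fA_val.
Qed.

Lemma Alg_hZero : forall d, azero Alg = Some d ->
  S (hbot H) /\ fA (fun _ => hbot H) = d.
Proof.
move=> d hg; have [e ge] := @optbE (has_zero L) _ _ d hg; subst d.
have hxy := hzeroS e; split => //; by apply: fA_E.
Qed.

Lemma Alg_hOne : forall d, aone Alg = Some d ->
  S (htop H) /\ fA (fun _ => htop H) = d.
Proof.
move=> d hg; have [e ge] := @optbE (has_one L) _ _ d hg; subst d.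
have hxy := honeS e; split => //; by apply: fA_E.
Qed.

Lemma Alg_surj : forall b : Alg, exists2 x : unit -> H, S (x tt) & fA x = b.
Proof.
move=> b; exists (fun _ => proj1_sig b); first exact: proj2_sig b.
by apply: fA_E => //; exact: proj2_sig b.
Qed.

Lemma Alg_variety : in_variety L S Alg.
Proof.
split; first by split; rewrite /= optb_some.
exists unit, (fun x => S (x tt)), fA.
split; first exact: Alg_hP.
split; first exact: Alg_hImp.
split; first exact: Alg_hAnd.
split; first exact: Alg_hOr.
split; first exact: Alg_hNeg.
split; first exact: Alg_hZero.
split; first exact: Alg_hOne.
exact: Alg_surj.
Qed.

Lemma Alg_eval phi (v : nat -> H) (hv : forall n, S (v n)) : expr Alg phi ->
  proj1_sig (beval (fun n => (exist _ (v n) (hv n) : Alg)) phi) = heval v phi.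
Proof.
move=> E.
pose x : nat -> unit -> H := fun n _ => v n.
have [Pc fc] := comm Alg_hImp Alg_hOr Alg_hNeg Alg_hZero E (x := x) hv.
have -> : (fun n => (exist _ (v n) (hv n) : Alg)) = (fun n => fA (x n)).
  apply: functional_extensionality => n; apply: sig_eq; rewrite fA_val //; exact: hv.
by rewrite -fc fA_val //; exact: Pc.
Qed.
End Alg.

Lemma dir_c (L : lang) (Q : quasi) (H : heyting) (S : H -> Prop) :
  sahlqvist_quasi_in L Q -> subreduct L S ->
  (forall B : lalg, in_variety L S B -> sat_tr (@filt_le B) Q) ->
  forall theta, A_set Q theta -> sub_valid S theta.
Proof.
move=> hq hS hsat theta [k hk ->] v hv.
pose B := Alg hS.
have hB : in_variety L S B := Alg_variety hS.
have hL := variety_laws hB.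
have hsig : has_sig L B by case: hB.
have hsatB := hsat B hB.
case: hq => hsz hyz hocc hbody hlang.
pose e : nat -> B := fun n => exist _ (v n) (hv n).
have hval : proj1_sig (beval e (A_form Q k)) = heval v (A_form Q k).
  exact: (Alg_eval hv (expr_Aform hsig hlang hk)).
apply: NNPP => hne.
pose T : B -> Prop := fun b => proj1_sig b = htop H.
have hT : impl_filter T.
  split.
  - move=> a; rewrite /T /=; exact: himp_refl.
  - move=> a b; rewrite /T /= => ha hab; apply: himp_top_l; by rewrite -{1}ha.
have nT : ~ T (beval e (A_form Q k)) by rewrite /T hval.
have [M [hM hTM nM]] := separation hT nT.
pose F : filt_star B := exist _ M hM.
rewrite beval_Aform in nM.
have [G [hFG hall nG]] := chain_sep hL (H := F) nM.
pose le' : nat -> seq B := fun m => [seq e (copy m j) | j <- iota 1 k].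
pose vv : nat -> filt_star B -> Prop := fun n Hx =>
  if n == q_y Q then filt_le G Hx else if n == q_z Q then ~ filt_le Hx G else wl le' n Hx.
have hup : forall n, upset (@filt_le B) (vv n).
  move=> n x y hxy; rewrite /vv; case: (n == q_y Q).
  - move=> hGx z hz; exact: hxy _ (hGx _ hz).
  - case: (n == q_z Q).
    + move=> hn hyG; apply: hn => z hz; exact: hyG _ (hxy _ hz).
    + move=> h t ht; exact: hxy _ (h t ht).
have hzy : (q_z Q == q_y Q) = false by apply/negbTE; rewrite eq_sym.
have hvy : forall x, vv (q_y Q) x = filt_le G x by move=> x; rewrite /vv eqxx.
have hvz : forall x, vv (q_z Q) x = ~ filt_le x G by move=> x; rewrite /vv hzy eqxx.
have hyp : forall phi, In phi (q_phis Q) -> forall x, upeval (@filt_le B) vv phi x /\ vv (q_y Q) x -> vv (q_z Q) x.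
  move=> phi hphi x [hphix hyx]; rewrite hvy in hyx; rewrite hvz => hxG.
  have hoc := all_In hocc hphi; move/andP: hoc => [noy noz].
  have hag : forall m, occurs m phi -> forall x, vv m x <-> wl le' m x.
    move=> m hm x'; rewrite /vv.
    have -> : (m == q_y Q) = false by apply/negbTE; apply: contraNneq noy => <-.
    have -> : (m == q_z Q) = false by apply/negbTE; apply: contraNneq noz => <-.
    by [].
  have hw := proj1 (upeval_agree (@filt_le B) hag x) hphix.
  have hm := proj1 (truth hL hsig le' (e (copy 0 1)) (all_In hlang hphi) x) hw.
  have hc : pt x (chain (map (beval e) (trk k phi)) (e 0)).
    apply: hyx; apply: hall; apply/In_map; by exists phi.
  rewrite (mirror _ _ hk) in hc.
  apply: nG; apply: hxG; exact: (Kl_mp hL (ptF x) hm hc).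
have := hsatB vv hup hyp G; rewrite hvy hvz; apply; by [].
Qed.

Theorem lemma9p4 (L : lang) (Q : quasi) (H : heyting) (S : H -> Prop) :
  sahlqvist_quasi_in L Q ->
  subreduct L S ->
  ((forall theta, A_set Q theta -> sub_valid S theta) <->
   (forall B : lalg, in_variety L S B -> sat_tr (@filt_le B) Q)).
Proof.
move=> hq hS; split.
- exact: dir_b hq.
- exact: dir_c hq hS.
Qed.
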